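(* Assume $(\mathbf{H}_f)$ and $(\mathbf{H}_g)$, let $\eta\in C^{\beta\text{-Hol}}([-r,0],\mathbb{R}^d)$ and let $x$ be the solution of the delay equation on $[-r,T]$ with $x_0=\eta$. Let $C:=2(\|g(0)\|+L'+L_g(K+1))$ with $L':=\max\{L_f,\|f(0)\|\}$ and $K:=\frac{1}{1-2^{1-(\nu+\beta)}}$, fix $\mu\in(0,\min\{1,C\})$, and let $t_i$ and $N(t,\omega)$ be the associated stopping times and counting function. Then for every $t\in[0,T]$, $$\|x_t\|_{\infty,\beta,[-r,0]}\le (1-\mu)^{-(N(t,\omega)+1)}\big[\|\eta\|_{\infty,\beta,[-r,0]}+1\big].$$ Moreover, for every integer $k\ge1$ with $k(\nu-\beta)\ge1$, $$N(T,\omega)\le 2^{k-1}\Big(\frac{C}{\mu}\Big)^k\Big(T^{k(1-\beta)}+T^{k(\nu-\beta)}|||\omega|||^k_{\nu,[0,T]}\Big).$$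
   Context: $\|\cdot\|$ is the Euclidean norm; $r,T>0$; $C_r:=C([-r,0],\mathbb{R}^d)$ with sup norm; $x_t(u)=x(t+u)$, $u\in[-r,0]$. For $0<\alpha\le1$: $|||x|||_{\alpha,[a,b]}=\sup_{a\le s<t\le b}\frac{\|x(t)-x(s)\|}{(t-s)^\alpha}$, $\|x\|_{\infty,\alpha,[a,b]}=\sup_{[a,b]}\|x\|+|||x|||_{\alpha,[a,b]}$, $C^{\alpha\text{-Hol}}$ the space where finite. Parameters: $\nu\in(\tfrac12,1]$; $\omega\in C^{\nu\text{-Hol}}([0,T],\mathbb{R})$ with $\lim_{h\to0}\sup_{0\le s<t\le T,\,t-s\le h}\frac{|\omega(t)-\omega(s)|}{(t-s)^\nu}=0$; $\frac{1-\nu}{\nu}<\delta\le1$; $\beta\in(0,\nu)$ with $\beta\delta+\nu>1$. $(\mathbf{H}_f)$: $\|f(\xi)-f(\eta)\|\le L_f\|\xi-\eta\|_{\infty,[-r,0]}$ for $f:C_r\to\mathbb{R}^d$. $(\mathbf{H}_g)$: $g:C_r\to\mathbb{R}^d$ Fréchet $C^1$, $\|Dg\|\le L_g$, and for each $M>0$ there is $L_M$ with $\|Dg(\xi)-Dg(\eta)\|\le L_M\|\xi-\eta\|^\delta_{\infty,[-r,0]}$ for $\|\xi\|,\|\eta\|\le M$. The solution is the unique $x\in C^{\beta\text{-Hol}}([-r,T],\mathbb{R}^d)$ with $x_0=\eta$ and $x(t)=\eta(0)+\int_0^tf(x_s)ds+\int_0^tg(x_s)d\omega(s)$ (Young integral)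 for $t\in[0,T]$. Stopping times: given $C>0$ and $\mu\in(0,C)$, set $t_0=0$ and $t_{i+1}=\sup\{t\in[t_i,T]: C[(t-t_i)^{1-\beta}+(t-t_i)^{\nu-\beta}|||\omega|||_{\nu,[t_i,t]}]\le\mu\}$; the counting function is $N(t,\omega):=\#\{i\ge1: t_i<t\}$ for $t\in[0,T]$ (the number of stopping times in $(0,t)$). *)

(* Defs.v *)
From Stdlib Require Import Reals Lra List ClassicalEpsilon.
Open Scope R_scope.

(** Vectors of R^d are represented as [nat -> R]; only components [c < d] matter. *)
Definition Vec := nat -> R.

Fixpoint rsum (n : nat) (F : nat -> R) : R :=
  match n with O => 0 | S m => rsum m F + F m end.

Definition vnorm (d : nat) (v : Vec) : R := sqrt (rsum d (fun i => v i ^ 2)).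
Definition vsub (v w : Vec) : Vec := fun i => v i - w i.

(** Real power x^y for y > 0, with the convention 0^y = 0 (Stdlib's Rpower 0 y = 1). *)
Definition pw (x y : R) : R := if Rle_dec x 0 then 0 else Rpower x y.

(** Supremum of a set of reals: the least upper bound when the set is nonempty and
    bounded above, 0 otherwise (only used on sets that are nonempty and bounded, or
    empty sets of nonnegative quantities, where 0 is the right convention). *)
Definition Rsup (E : R -> Prop) : R :=
  match excluded_middle_informative (bound E /\ exists y, E y) with
  | left H => proj1_sig (completeness E (proj1 H) (proj2 H))
  | right _ => 0
  end.

Definition supn (d : nat) (x : R -> Vec) (a b : R) : R :=
  Rsup (fun y => exists u, a <= u <= b /\ y = vnorm d (x u)).

Definition holder (d : nat) (alpha : R) (x : R -> Vec) (a b : R) : R :=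
  Rsup (fun y => exists s t, a <= s /\ s < t /\ t <= b /\
                 y = vnorm d (vsub (x t) (x s)) / pw (t - s) alpha).

Definition holderS (alpha : R) (w : R -> R) (a b : R) : R :=
  Rsup (fun y => exists s t, a <= s /\ s < t /\ t <= b /\
                 y = Rabs (w t - w s) / pw (t - s) alpha).

Definition hnorm (d : nat) (alpha : R) (x : R -> Vec) (a b : R) : R :=
  supn d x a b + holder d alpha x a b.

Definition is_holder (d : nat) (alpha : R) (x : R -> Vec) (a b : R) : Prop :=
  exists M, forall s t, a <= s -> s < t -> t <= b ->
    vnorm d (vsub (x t) (x s)) <= M * pw (t - s) alpha.

Definition is_holderS (alpha : R) (w : R -> R) (a b : R) : Prop :=
  exists M, forall s t, a <= s -> s < t -> t <= b ->
    Rabs (w t - w s) <= M * pw (t - s) alpha.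

Definition little_holderS (alpha : R) (w : R -> R) (a b : R) : Prop :=
  forall eps, 0 < eps -> exists h, 0 < h /\
    forall s t, a <= s -> s < t -> t <= b -> t - s <= h ->
      Rabs (w t - w s) <= eps * pw (t - s) alpha.

Definition inCr (d : nat) (r : R) (xi : R -> Vec) : Prop :=
  forall u, -r <= u <= 0 -> forall eps, 0 < eps -> exists del, 0 < del /\
    forall v, -r <= v <= 0 -> Rabs (v - u) < del -> vnorm d (vsub (xi v) (xi u)) < eps.

Definition seg (x : R -> Vec) (t : R) : R -> Vec := fun u => x (t + u).

Definition zeroF : R -> Vec := fun _ _ => 0.

Definition tagged_partition (a b : R) (n : nat) (p q : nat -> R) : Prop :=
  p O = a /\ p n = b /\
  (forall i, (i < n)%nat -> p i < p (S i) /\ p i <= q i <= p (S i)).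

Definition RS_sum (h : R -> Vec) (w : R -> R) (n : nat) (p q : nat -> R) (c : nat) : R :=
  rsum n (fun i => h (q i) c * (w (p (S i)) - w (p i))).

Definition RS_integral (d : nat) (h : R -> Vec) (w : R -> R) (a b : R) (I : Vec) : Prop :=
  forall c, (c < d)%nat -> forall eps, 0 < eps -> exists del, 0 < del /\
    forall n p q, tagged_partition a b n p q ->
      (forall i, (i < n)%nat -> p (S i) - p i < del) ->
      Rabs (RS_sum h w n p q c - I c) < eps.

Definition Hf (d : nat) (r : R) (f : (R -> Vec) -> Vec) (Lf : R) : Prop :=
  forall xi et, inCr d r xi -> inCr d r et ->
    vnorm d (vsub (f xi) (f et)) <= Lf * supn d (fun u => vsub (xi u) (et u)) (-r) 0.

Definition Hg (d : nat) (r : R) (g : (R -> Vec) -> Vec)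
    (Dg : (R -> Vec) -> (R -> Vec) -> Vec) (Lg delta : R) : Prop :=
  (forall xi, inCr d r xi -> forall h1 h2 a, inCr d r h1 -> inCr d r h2 ->
     forall c, (c < d)%nat ->
       Dg xi (fun u i => h1 u i + a * h2 u i) c = Dg xi h1 c + a * Dg xi h2 c) /\
  (forall xi h, inCr d r xi -> inCr d r h ->
     vnorm d (Dg xi h) <= Lg * supn d h (-r) 0) /\
  (forall xi, inCr d r xi -> forall eps, 0 < eps -> exists del, 0 < del /\
     forall h, inCr d r h -> supn d h (-r) 0 < del ->
       vnorm d (fun i => g (fun u j => xi u j + h u j) i - g xi i - Dg xi h i)
         <= eps * supn d h (-r) 0) /\
  (forall M, 0 < M -> exists LM, forall xi et, inCr d r xi -> inCr d r et ->
     supn d xi (-r) 0 <= M -> supn d et (-r) 0 <= M ->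
     forall h, inCr d r h ->
       vnorm d (vsub (Dg xi h) (Dg et h))
         <= LM * pw (supn d (fun u => vsub (xi u) (et u)) (-r) 0) delta * supn d h (-r) 0).

Fixpoint stop (C mu beta nu T : R) (w : R -> R) (i : nat) : R :=
  match i with
  | O => 0
  | S j => let ti := stop C mu beta nu T w j in
      Rsup (fun t => ti <= t <= T /\
        C * (pw (t - ti) (1 - beta) + pw (t - ti) (nu - beta) * holderS nu w ti t) <= mu)
  end.

Definition is_count (st : nat -> R) (t : R) (N : nat) : Prop :=
  exists l : list nat, NoDup l /\
    (forall i, In i l <-> ((1 <= i)%nat /\ st i < t)) /\ length l = N.

Definition is_solution (d : nat) (r T : R) (f g : (R -> Vec) -> Vec) (w : R -> R)
    (beta : R) (eta x : R -> Vec) : Prop :=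
  is_holder d beta x (-r) T /\
  (forall u, -r <= u <= 0 -> forall c, (c < d)%nat -> x u c = eta u c) /\
  (forall t, 0 <= t <= T -> exists I1 I2,
     RS_integral d (fun s => f (seg x s)) (fun s => s) 0 t I1 /\
     RS_integral d (fun s => g (seg x s)) w 0 t I2 /\
     forall c, (c < d)%nat -> x t c = eta 0 c + I1 c + I2 c).

(* Main.v *)
Require Import Defs.
From Stdlib Require Import Reals Lra Lia List Classical ClassicalEpsilon FunctionalExtensionality PropExtensionality.
Open Scope R_scope.

Lemma rsum_ext n F G : (forall i, (i < n)%nat -> F i = G i) -> rsum n F = rsum n G.
Proof. induction n; simpl; intros H; auto. rewrite IHn by (intros; apply H; lia). rewrite H by lia; auto. Qed.

Lemma rsum_plus n F G : rsum n (fun i => F i + G i) = rsum n F + rsum n G.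
Proof. induction n; simpl; [lra|rewrite IHn; lra]. Qed.

Lemma rsum_minus n F G : rsum n (fun i => F i - G i) = rsum n F - rsum n G.
Proof. induction n; simpl; [lra|rewrite IHn; lra]. Qed.

Lemma rsum_scal n a F : rsum n (fun i => a * F i) = a * rsum n F.
Proof. induction n; simpl; [lra|rewrite IHn; lra]. Qed.

Lemma rsum_le n F G : (forall i, (i < n)%nat -> F i <= G i) -> rsum n F <= rsum n G.
Proof. induction n; simpl; intros H; [lra|]. assert (F n <= G n) by (apply H; lia).
 assert (rsum n F <= rsum n G) by (apply IHn; intros; apply H; lia). lra. Qed.

Lemma rsum_nonneg n F : (forall i, (i < n)%nat -> 0 <= F i) -> 0 <= rsum n F.
Proof. intros H. replace 0 with (rsum n (fun _ => 0)). apply rsum_le; auto.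
 clear H; induction n; simpl; auto; rewrite IHn; lra. Qed.

Lemma rsum_term_le n F i : (forall j, (j < n)%nat -> 0 <= F j) -> (i < n)%nat -> F i <= rsum n F.
Proof. induction n; simpl; intros H Hi; [lia|].
 assert (0 <= rsum n F) by (apply rsum_nonneg; intros; apply H; lia).
 destruct (Nat.eq_dec i n). subst; lra.
 assert (F i <= rsum n F) by (apply IHn; [intros; apply H; lia| lia]).
 assert (0 <= F n) by (apply H; lia). lra. Qed.

Lemma rsum_const n a : rsum n (fun _ => a) = INR n * a.
Proof. induction n; simpl rsum; [simpl; lra|]. rewrite IHn, S_INR; lra. Qed.

Lemma rsum_split n m F : rsum (n + m) F = rsum n F + rsum m (fun i => F (n + i)%nat).
Proof. induction m; simpl. rewrite Nat.add_0_r; lra.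
 rewrite Nat.add_succ_r; simpl; rewrite IHm; lra. Qed.

Lemma rsum_double m F : rsum (2 * m) F = rsum m (fun i => F (2 * i)%nat + F (2 * i + 1)%nat).
Proof. induction m. simpl; auto.
 replace (2 * S m)%nat with (S (S (2 * m)))%nat by lia. change (rsum (S (S (2 * m))) F) with (rsum (2*m) F + F (2*m)%nat + F (S (2*m))).
 change (rsum (S m) (fun i => F (2 * i)%nat + F (2 * i + 1)%nat)) with
   (rsum m (fun i => F (2 * i)%nat + F (2 * i + 1)%nat) + (F (2 * m)%nat + F (2 * m + 1)%nat)).
 rewrite IHm. replace (2 * m + 1)%nat with (S (2*m))%nat by lia. lra. Qed.

Lemma rsum_abs n F : Rabs (rsum n F) <= rsum n (fun i => Rabs (F i)).
Proof. induction n; simpl. rewrite Rabs_R0; lra.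
 eapply Rle_trans. apply Rabs_triang. lra. Qed.

Lemma vnorm_nonneg d v : 0 <= vnorm d v.
Proof. apply sqrt_pos. Qed.

Lemma vnorm_ext d v w : (forall c, (c < d)%nat -> v c = w c) -> vnorm d v = vnorm d w.
Proof. intros H; unfold vnorm; f_equal; apply rsum_ext; intros; rewrite H; auto. Qed.

Lemma rsum_sq_nonneg d v : 0 <= rsum d (fun i => v i ^ 2).
Proof. apply rsum_nonneg; intros; apply pow2_ge_0. Qed.

Lemma vnorm_sq d v : vnorm d v ^ 2 = rsum d (fun i => v i ^ 2).
Proof. unfold vnorm. rewrite pow2_sqrt; auto. apply rsum_sq_nonneg. Qed.

Lemma vnorm_comp d v c : (c < d)%nat -> Rabs (v c) <= vnorm d v.
Proof. intros Hc. rewrite <- sqrt_Rsqr_abs. apply sqrt_le_1_alt. unfold Rsqr.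
 replace (v c * v c) with ((fun i => v i ^ 2) c) by (simpl; ring).
 apply (rsum_term_le d (fun i => v i ^ 2) c); auto. intros; nra. Qed.

Lemma vnorm_zero_comp d v : vnorm d v = 0 -> forall c, (c < d)%nat -> v c = 0.
Proof. intros H c Hc. pose proof (vnorm_comp d v c Hc). rewrite H in H0.
 pose proof (Rabs_pos (v c)). destruct (Req_dec (v c) 0); auto.
 pose proof (Rabs_pos_lt _ H2). lra. Qed.

Lemma rsum_cs d v w : rsum d (fun i => v i * w i) <= vnorm d v * vnorm d w.
Proof.
  set (A := vnorm d v). set (B := vnorm d w).
  assert (HA: 0 <= A) by apply vnorm_nonneg. assert (HB: 0 <= B) by apply vnorm_nonneg.
  destruct (Req_dec A 0) as [A0|A0].
  { rewrite (rsum_ext d _ (fun _ => 0)). rewrite rsum_const, A0. lra.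
    intros i Hi. rewrite (vnorm_zero_comp d v A0 i Hi). ring. }
  destruct (Req_dec B 0) as [B0|B0].
  { rewrite (rsum_ext d _ (fun _ => 0)). rewrite rsum_const, B0. lra.
    intros i Hi. rewrite (vnorm_zero_comp d w B0 i Hi). ring. }
  assert (H0 : 0 <= rsum d (fun i => (B * v i - A * w i) ^ 2)) by (apply rsum_nonneg; intros; apply pow2_ge_0).
  rewrite (rsum_ext d _ (fun i => B^2 * (v i ^ 2) + (A^2 * (w i ^ 2) - (2 * A * B) * (v i * w i)))) in H0
    by (intros; ring).
  rewrite rsum_plus, rsum_minus, !rsum_scal in H0.
  rewrite <- !vnorm_sq in H0. fold A B in H0.
  assert (0 < A * B) by (apply Rmult_lt_0_compat; lra).
  nra.
Qed.

Lemma vnorm_triang d v w : vnorm d (fun i => v i + w i) <= vnorm d v + vnorm d w.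
Proof.
  assert (H: vnorm d (fun i => v i + w i) ^ 2 <= (vnorm d v + vnorm d w) ^ 2).
  { rewrite vnorm_sq.
    rewrite (rsum_ext d _ (fun i => v i ^ 2 + (w i ^ 2 + 2 * (v i * w i)))) by (intros; ring).
    rewrite !rsum_plus, rsum_scal, <- !vnorm_sq. pose proof (rsum_cs d v w). nra. }
  pose proof (vnorm_nonneg d (fun i => v i + w i)). pose proof (vnorm_nonneg d v).
  pose proof (vnorm_nonneg d w). nra.
Qed.

Lemma vnorm_scal d a v : vnorm d (fun i => a * v i) = Rabs a * vnorm d v.
Proof. unfold vnorm.
  rewrite (rsum_ext d _ (fun i => a ^ 2 * v i ^ 2)) by (intros; ring).
  rewrite rsum_scal, sqrt_mult_alt by nra. f_equal.
  rewrite <- sqrt_Rsqr_abs. f_equal. unfold Rsqr; ring. Qed.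

Lemma vnorm_zero d : vnorm d (fun _ => 0) = 0.
Proof. unfold vnorm. rewrite (rsum_ext d _ (fun _ => 0)) by (intros; ring).
  rewrite rsum_const, Rmult_0_r. apply sqrt_0. Qed.

Lemma vsub_sym d a b : vnorm d (vsub a b) = vnorm d (vsub b a).
Proof. unfold vsub.
 rewrite <- (Rmult_1_l (vnorm d (fun i => b i - a i))).
 replace 1 with (Rabs (-1)) by (unfold Rabs; destruct Rcase_abs; lra).
 rewrite <- vnorm_scal. apply vnorm_ext; intros; ring. Qed.

Lemma vsub_triang d a b c : vnorm d (vsub a c) <= vnorm d (vsub a b) + vnorm d (vsub b c).
Proof. unfold vsub. rewrite (vnorm_ext d (fun i => a i - c i) (fun i => (a i - b i) + (b i - c i)))
  by (intros; ring). apply vnorm_triang. Qed.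

Lemma vnorm_le_sub d a b : vnorm d a <= vnorm d b + vnorm d (vsub a b).
Proof. unfold vsub. rewrite (vnorm_ext d a (fun i => b i + (a i - b i))) by (intros; ring).
 apply vnorm_triang. Qed.

Lemma vnorm_rsum d n F : vnorm d (fun c => rsum n (fun j => F j c)) <= rsum n (fun j => vnorm d (F j)).
Proof. induction n; simpl.
 - rewrite vnorm_zero; lra.
 - eapply Rle_trans. apply (vnorm_triang d (fun c => rsum n (fun j => F j c)) (F n)). lra. Qed.

Lemma vnorm_le_sumabs d v : vnorm d v <= rsum d (fun c => Rabs (v c)).
Proof. induction d; simpl.
 - unfold vnorm; simpl; rewrite sqrt_0; lra.
 - unfold vnorm in *; cbn [rsum].
   assert (H1 : 0 <= rsum d (fun i => v i ^ 2)) by apply rsum_sq_nonneg.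
   assert (sqrt (rsum d (fun i => v i ^ 2) + v d ^ 2) <= sqrt (rsum d (fun i => v i ^ 2)) + Rabs (v d)).
   { pose proof (sqrt_pos (rsum d (fun i => v i ^ 2))). pose proof (Rabs_pos (v d)). pose proof (pow2_ge_0 (v d)).
     apply Rsqr_incr_0_var; [|lra]. rewrite Rsqr_sqrt by lra. unfold Rsqr.
     replace (v d ^ 2) with (Rabs (v d) * Rabs (v d)) by (rewrite <- Rabs_mult; rewrite Rabs_pos_eq; [ring|apply Rle_0_sqr]).
     pose proof (sqrt_sqrt _ H1). nra. }
   lra. Qed.

Lemma exp_le_mono a b : a <= b -> exp a <= exp b.
Proof. intros [H|H]; [left; apply exp_increasing; auto| subst; lra]. Qed.

Lemma ln_le_mono a b : 0 < a -> a <= b -> ln a <= ln b.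
Proof. intros Ha [H|H]; [left; apply ln_increasing; auto| subst; lra]. Qed.

Lemma pw_nonneg x y : 0 <= pw x y.
Proof. unfold pw; destruct Rle_dec; [lra| unfold Rpower; left; apply exp_pos]. Qed.

Lemma pw_pos_eq x y : 0 < x -> pw x y = Rpower x y.
Proof. unfold pw; destruct Rle_dec; auto; lra. Qed.

Lemma pw_pos x y : 0 < x -> 0 < pw x y.
Proof. intros; rewrite pw_pos_eq; auto; unfold Rpower; apply exp_pos. Qed.

Lemma pw_zero x y : x <= 0 -> pw x y = 0.
Proof. unfold pw; destruct Rle_dec; auto; lra. Qed.

Lemma pw_le_base x x' y : 0 <= y -> 0 <= x <= x' -> pw x y <= pw x' y.
Proof. intros Hy [H0 H1]. destruct (Req_dec x 0).
 - rewrite pw_zero by lra. apply pw_nonneg.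
 - rewrite !pw_pos_eq by lra. apply Rle_Rpower_l; lra. Qed.

Lemma pw_mult x z y : 0 <= x -> 0 <= z -> pw (x * z) y = pw x y * pw z y.
Proof. intros [Hx|Hx] [Hz|Hz]; try (subst; rewrite ?Rmult_0_l, ?Rmult_0_r, !pw_zero by lra; ring).
 rewrite !pw_pos_eq by nra. rewrite Rpower_mult_distr; auto; lra. Qed.

Lemma pw_plus x a b : 0 <= x -> pw x (a + b) = pw x a * pw x b.
Proof. intros Hx. destruct (Req_dec x 0). subst; rewrite !pw_zero by lra; ring.
 rewrite !pw_pos_eq by lra. rewrite Rpower_plus; auto. Qed.

Lemma pw_1 x : 0 <= x -> pw x 1 = x.
Proof. intros Hx. destruct (Req_dec x 0). subst; rewrite pw_zero; lra.
 rewrite pw_pos_eq by lra. apply Rpower_1; lra. Qed.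

Lemma pw_exp_anti x a b : 0 <= x <= 1 -> a <= b -> pw x b <= pw x a.
Proof. intros Hx Hab. destruct (Req_dec x 0). subst; rewrite !pw_zero; lra.
 rewrite !pw_pos_eq by lra. unfold Rpower. apply exp_le_mono.
 assert (ln x <= 0) by (rewrite <- ln_1; apply ln_le_mono; lra). nra. Qed.

Lemma pw_le_1 x y : 0 <= x <= 1 -> 0 <= y -> pw x y <= 1.
Proof. intros Hx Hy. destruct (Req_dec x 0). subst; rewrite pw_zero; lra.
 rewrite <- (pw_1 1) by lra. replace (pw 1 1) with (pw x 0).
 apply pw_exp_anti; lra. rewrite !pw_pos_eq by lra. rewrite Rpower_O, Rpower_1; lra. Qed.

Lemma pw_ge_1 x y : 1 <= x -> 0 <= y -> 1 <= pw x y.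
Proof. intros Hx Hy. rewrite pw_pos_eq by lra. unfold Rpower. rewrite <- exp_0. apply exp_le_mono.
 assert (0 <= ln x) by (rewrite <- ln_1; apply ln_le_mono; lra). nra. Qed.

Lemma pw_lt_1_inv x y : 0 < y -> pw x y < 1 -> x < 1.
Proof. intros Hy H. destruct (Rlt_le_dec x 1); auto. pose proof (pw_ge_1 x y r). lra. Qed.

Lemma pw_small y e : 0 < y -> 0 < e -> exists h, 0 < h /\ forall h', h' <= h -> pw h' y <= e.
Proof. intros Hy He. exists (Rpower e (/ y)). split. unfold Rpower; apply exp_pos.
 intros h' Hh'. destruct (Rle_dec h' 0). rewrite pw_zero; lra.
 eapply Rle_trans. apply pw_le_base with (x' := Rpower e (/ y)); lra.
 rewrite pw_pos_eq by (unfold Rpower; apply exp_pos). rewrite Rpower_mult.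
 rewrite Rinv_l by lra. rewrite Rpower_1; lra. Qed.

Lemma pw_INR x a k : 0 <= x -> (1 <= k)%nat -> pw x (INR k * a) = pw x a ^ k.
Proof. intros [Hx|Hx] Hk.
 - rewrite !pw_pos_eq by lra. rewrite Rmult_comm, <- Rpower_mult, Rpower_pow; auto.
   unfold Rpower; apply exp_pos.
 - subst. rewrite !pw_zero by lra. destruct k; [lia|]. simpl; ring. Qed.

Lemma Rsup_ub E y : bound E -> E y -> y <= Rsup E.
Proof. intros Hb Hy. unfold Rsup. destruct excluded_middle_informative as [H|H].
 - match goal with |- context [proj1_sig ?c] => destruct c as [m [Hm Hm']] end; simpl. apply Hm; auto.
 - exfalso; apply H; split; eauto. Qed.

Lemma Rsup_lub E M : (exists y, E y) -> (forall y, E y -> y <= M) -> Rsup E <= M.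
Proof. intros Hne Hub. unfold Rsup. destruct excluded_middle_informative as [H|H].
 - match goal with |- context [proj1_sig ?c] => destruct c as [m [Hm' Hm]] end; simpl. apply Hm; auto.
 - exfalso; apply H; split; auto. exists M; auto. Qed.

Lemma Rsup_le E M : (forall y, E y -> y <= M) -> 0 <= M -> Rsup E <= M.
Proof. intros Hub HM. unfold Rsup. destruct excluded_middle_informative as [H|H]; auto.
 match goal with |- context [proj1_sig ?c] => destruct c as [m [Hm' Hm]] end; simpl. apply Hm; auto. Qed.

Lemma Rsup_nonneg E : (forall y, E y -> 0 <= y) -> 0 <= Rsup E.
Proof. intros Hp. unfold Rsup. destruct excluded_middle_informative as [H|H]; [|lra].
 match goal with |- context [proj1_sig ?c] => destruct c as [m [Hm Hm']] end; simpl. destruct H as [_ [y Hy]].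
 pose proof (Hm y Hy); pose proof (Hp y Hy); lra. Qed.

Lemma Rsup_approx E e : bound E -> (exists y, E y) -> 0 < e -> exists y, E y /\ Rsup E - e < y.
Proof. intros Hb Hne He. destruct (classic (exists y, E y /\ Rsup E - e < y)) as [H|H]; auto.
 assert (Rsup E <= Rsup E - e); [|lra]. apply Rsup_lub; auto. intros y Hy.
 destruct (Rle_dec y (Rsup E - e)); auto. exfalso; apply H; exists y; split; auto; lra. Qed.

Lemma is_holder_sub d be x A B a b : is_holder d be x A B -> A <= a -> b <= B -> is_holder d be x a b.
Proof. intros [M HM] Ha Hb. exists M. intros; apply HM; lra. Qed.

Lemma holder_abs d be x a b : is_holder d be x a b -> exists M, 0 <= M /\ forall s t, a <= s -> s < t -> t <= b ->
    vnorm d (vsub (x t) (x s)) <= M * pw (t - s) be.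
Proof. intros [M HM]. exists (Rabs M). split. apply Rabs_pos. intros s t H1 H2 H3.
 eapply Rle_trans. apply HM; auto. apply Rmult_le_compat_r. apply pw_nonneg. apply Rle_abs. Qed.

Lemma holder_bounded d be x a b : 0 <= be -> a <= b -> is_holder d be x a b ->
  exists Bd, forall u, a <= u <= b -> vnorm d (x u) <= Bd.
Proof. intros Hbe Hab Hh. destruct (holder_abs _ _ _ _ _ Hh) as [M [HM0 HM]].
 exists (vnorm d (x a) + M * pw (b - a) be). intros u Hu.
 destruct (Req_dec u a). subst u. pose proof (pw_nonneg (b - a) be). nra.
 eapply Rle_trans. apply (vnorm_le_sub d (x u) (x a)).
 apply Rplus_le_compat_l. eapply Rle_trans. apply HM; lra.
 apply Rmult_le_compat_l; auto. apply pw_le_base; lra. Qed.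

Lemma supn_ub d x a b u : (exists Bd, forall u, a <= u <= b -> vnorm d (x u) <= Bd) ->
  a <= u <= b -> vnorm d (x u) <= supn d x a b.
Proof. intros [Bd HB] Hu. unfold supn. apply Rsup_ub.
 - exists Bd. intros y [u' [Hu' ->]]. apply HB; auto.
 - exists u; split; auto. Qed.

Lemma supn_le d x a b Bd : (forall u, a <= u <= b -> vnorm d (x u) <= Bd) -> 0 <= Bd -> supn d x a b <= Bd.
Proof. intros H H0. unfold supn. apply Rsup_le; auto. intros y [u [Hu ->]]; auto. Qed.

Lemma supn_nonneg d x a b : 0 <= supn d x a b.
Proof. unfold supn. apply Rsup_nonneg. intros y [u [_ ->]]; apply vnorm_nonneg. Qed.

Lemma holder_ub d be x a b s t : is_holder d be x a b -> a <= s -> s < t -> t <= b ->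
  vnorm d (vsub (x t) (x s)) <= holder d be x a b * pw (t - s) be.
Proof. intros Hh H1 H2 H3. destruct (holder_abs _ _ _ _ _ Hh) as [M [HM0 HM]].
 assert (Hp : 0 < pw (t - s) be) by (apply pw_pos; lra).
 assert (vnorm d (vsub (x t) (x s)) / pw (t - s) be <= holder d be x a b).
 { unfold holder. apply Rsup_ub.
   - exists M. intros y [s' [t' [h1 [h2 [h3 ->]]]]].
     assert (0 < pw (t' - s') be) by (apply pw_pos; lra).
     apply Rmult_le_reg_r with (pw (t' - s') be); auto. unfold Rdiv. rewrite Rmult_assoc, Rinv_l by lra.
     rewrite Rmult_1_r; apply HM; auto.
   - exists s, t; repeat split; auto. }
 apply Rmult_le_reg_r with (/ pw (t - s) be). apply Rinv_0_lt_compat; auto.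
 rewrite Rmult_assoc, Rinv_r by lra. rewrite Rmult_1_r. auto. Qed.

Lemma holder_le d be x a b Bd : (forall s t, a <= s -> s < t -> t <= b -> vnorm d (vsub (x t) (x s)) <= Bd * pw (t - s) be) ->
  0 <= Bd -> holder d be x a b <= Bd.
Proof. intros H H0. unfold holder. apply Rsup_le; auto. intros y [s [t [h1 [h2 [h3 ->]]]]].
 assert (0 < pw (t - s) be) by (apply pw_pos; lra).
 apply Rmult_le_reg_r with (pw (t - s) be); auto. unfold Rdiv. rewrite Rmult_assoc, Rinv_l by lra.
 rewrite Rmult_1_r; apply H; auto. Qed.

Lemma holder_nonneg d be x a b : 0 <= holder d be x a b.
Proof. unfold holder. apply Rsup_nonneg. intros y [s [t [h1 [h2 [h3 ->]]]]].
 assert (0 < pw (t - s) be) by (apply pw_pos; lra). unfold Rdiv.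
 apply Rmult_le_pos. apply vnorm_nonneg. left; apply Rinv_0_lt_compat; auto. Qed.

Lemma holderS_abs be w a b : is_holderS be w a b -> exists M, 0 <= M /\ forall s t, a <= s -> s < t -> t <= b ->
    Rabs (w t - w s) <= M * pw (t - s) be.
Proof. intros [M HM]. exists (Rabs M). split. apply Rabs_pos. intros s t H1 H2 H3.
 eapply Rle_trans. apply HM; auto. apply Rmult_le_compat_r. apply pw_nonneg. apply Rle_abs. Qed.

Lemma holderS_bound be w a b a' b' : is_holderS be w a b -> a <= a' -> b' <= b ->
  bound (fun y => exists s t, a' <= s /\ s < t /\ t <= b' /\ y = Rabs (w t - w s) / pw (t - s) be).
Proof. intros Hh Ha Hb. destruct (holderS_abs _ _ _ _ Hh) as [M [HM0 HM]].
 exists M. intros y [s' [t' [h1 [h2 [h3 ->]]]]].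
 assert (0 < pw (t' - s') be) by (apply pw_pos; lra).
 apply Rmult_le_reg_r with (pw (t' - s') be); auto. unfold Rdiv. rewrite Rmult_assoc, Rinv_l by lra.
 rewrite Rmult_1_r; apply HM; lra. Qed.

Lemma holderS_ub be w a b a' b' s t : is_holderS be w a b -> a <= a' -> b' <= b -> a' <= s -> s < t -> t <= b' ->
  Rabs (w t - w s) <= holderS be w a' b' * pw (t - s) be.
Proof. intros Hh Ha Hb H1 H2 H3.
 assert (Hp : 0 < pw (t - s) be) by (apply pw_pos; lra).
 assert (Rabs (w t - w s) / pw (t - s) be <= holderS be w a' b').
 { unfold holderS. apply Rsup_ub. eapply holderS_bound; eauto.
   exists s, t; repeat split; auto. }
 apply Rmult_le_reg_r with (/ pw (t - s) be). apply Rinv_0_lt_compat; auto.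
 rewrite Rmult_assoc, Rinv_r by lra. rewrite Rmult_1_r. auto. Qed.

Lemma holderS_nonneg be w a b : 0 <= holderS be w a b.
Proof. unfold holderS. apply Rsup_nonneg. intros y [s [t [h1 [h2 [h3 ->]]]]].
 assert (0 < pw (t - s) be) by (apply pw_pos; lra). unfold Rdiv.
 apply Rmult_le_pos. apply Rabs_pos. left; apply Rinv_0_lt_compat; auto. Qed.

Lemma holderS_mono be w a b a' b' : is_holderS be w a b -> a <= a' -> b' <= b ->
  holderS be w a' b' <= holderS be w a b.
Proof. intros Hh Ha Hb. unfold holderS at 1. apply Rsup_le; [|apply holderS_nonneg].
 intros y [s [t [h1 [h2 [h3 ->]]]]]. unfold holderS. apply Rsup_ub.
 eapply holderS_bound; eauto; lra. exists s, t; repeat split; auto; lra. Qed.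

Lemma holderS_le_M be w a b a' b' M : (forall s t, a <= s -> s < t -> t <= b -> Rabs (w t - w s) <= M * pw (t - s) be) ->
  0 <= M -> a <= a' -> b' <= b -> holderS be w a' b' <= M.
Proof. intros HM HM0 Ha Hb. unfold holderS. apply Rsup_le; auto. intros y [s' [t' [h1 [h2 [h3 ->]]]]].
 assert (0 < pw (t' - s') be) by (apply pw_pos; lra).
 apply Rmult_le_reg_r with (pw (t' - s') be); auto. unfold Rdiv. rewrite Rmult_assoc, Rinv_l by lra.
 rewrite Rmult_1_r; apply HM; lra. Qed.

Lemma seg_hnorm_le d be r x t : 0 < r -> 0 <= be -> 0 <= t -> is_holder d be x (-r) t ->
  hnorm d be (seg x t) (-r) 0 <= hnorm d be x (-r) t.
Proof. intros Hr Hbe Ht Hh. unfold hnorm. apply Rplus_le_compat.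
 - apply supn_le; [|apply supn_nonneg]. intros u Hu. unfold seg. apply supn_ub.
   apply holder_bounded with be; auto; lra. lra.
 - apply holder_le; [|apply holder_nonneg]. intros s t' H1 H2 H3. unfold seg.
   replace (t' - s) with ((t + t') - (t + s)) by ring. apply holder_ub; auto; lra. Qed.

Lemma vsub_self_norm d a : vnorm d (vsub a a) = 0.
Proof. rewrite <- (vnorm_zero d). apply vnorm_ext; intros; unfold vsub; ring. Qed.

Lemma seg_inCr d be r T x t : 0 < be -> 0 <= t <= T -> is_holder d be x (-r) T -> inCr d r (seg x t).
Proof. intros Hbe Ht Hh. destruct (holder_abs _ _ _ _ _ Hh) as [M [HM0 HM]].
 intros u Hu eps Heps. destruct (pw_small be (eps / (M + 1)) Hbe) as [h [Hh0 Hh1]].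
 apply Rdiv_lt_0_compat; lra. exists h; split; auto. intros v Hv Hvu. unfold seg.
 assert (Hk : M * (eps / (M + 1)) < eps).
 { apply Rmult_lt_reg_r with (M + 1). lra. replace (M * (eps / (M + 1)) * (M + 1)) with (M * eps) by (field; lra). nra. }
 destruct (Rtotal_order u v) as [H|[H|H]].
 - eapply Rle_lt_trans. apply HM; lra. eapply Rle_lt_trans; [|apply Hk].
   apply Rmult_le_compat_l; auto. apply Hh1. rewrite Rabs_pos_eq in Hvu by lra. lra.
 - subst. rewrite vsub_self_norm; lra.
 - rewrite vsub_sym. eapply Rle_lt_trans. apply HM; lra. eapply Rle_lt_trans; [|apply Hk].
   apply Rmult_le_compat_l; auto. apply Hh1. rewrite Rabs_left in Hvu by lra. lra. Qed.

Lemma inCr_lin d r xi et a b : inCr d r xi -> inCr d r et -> inCr d r (fun u j => a * xi u j + b * et u j).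
Proof. intros H1 H2 u Hu eps Heps.
 set (e' := eps / (2 * (Rabs a + Rabs b + 1))).
 assert (He' : 0 < e') by (unfold e'; apply Rdiv_lt_0_compat; [lra| pose proof (Rabs_pos a); pose proof (Rabs_pos b); lra]).
 destruct (H1 u Hu e' He') as [d1 [Hd1 H1']]. destruct (H2 u Hu e' He') as [d2 [Hd2 H2']].
 exists (Rmin d1 d2). split. apply Rmin_pos; auto. intros v Hv Hvu.
 unfold vsub. rewrite (vnorm_ext d _ (fun i => a * (xi v i - xi u i) + b * (et v i - et u i))) by (intros; ring).
 eapply Rle_lt_trans. apply vnorm_triang. rewrite !vnorm_scal.
 assert (vnorm d (vsub (xi v) (xi u)) < e') by (apply H1'; auto; pose proof (Rmin_l d1 d2); lra).
 assert (vnorm d (vsub (et v) (et u)) < e') by (apply H2'; auto; pose proof (Rmin_r d1 d2); lra).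
 unfold vsub in *. pose proof (Rabs_pos a); pose proof (Rabs_pos b).
 assert (e' * (2 * (Rabs a + Rabs b + 1)) = eps) by (unfold e'; field; lra).
 pose proof (vnorm_nonneg d (fun i => xi v i - xi u i)). pose proof (vnorm_nonneg d (fun i => et v i - et u i)).
 nra. Qed.

Lemma inCr_const d r (k : Vec) : inCr d r (fun _ => k).
Proof. intros u Hu eps Heps. exists 1; split; [lra|]. intros. rewrite vsub_self_norm; lra. Qed.

Lemma le_eps_le a b : (forall e, 0 < e -> a <= b + e) -> a <= b.
Proof. intros H. destruct (Rle_dec a b); auto. specialize (H ((a - b) / 2)). lra. Qed.

Lemma supn_scal_le d r (h : R -> Vec) a : 0 < r ->
  (exists B, forall u, -r <= u <= 0 -> vnorm d (h u) <= B) ->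
  supn d (fun u j => a * h u j) (-r) 0 <= Rabs a * supn d h (-r) 0.
Proof. intros Hr Hb. apply supn_le. intros u Hu. rewrite vnorm_scal.
 apply Rmult_le_compat_l. apply Rabs_pos. apply supn_ub; auto.
 apply Rmult_le_pos. apply Rabs_pos. apply supn_nonneg. Qed.

Lemma g_lip d r g Dg Lg delta xi et : 0 < r -> Hg d r g Dg Lg delta -> 0 <= Lg ->
  inCr d r xi -> inCr d r et ->
  (exists B, forall u, -r <= u <= 0 -> vnorm d (vsub (et u) (xi u)) <= B) ->
  vnorm d (vsub (g et) (g xi)) <= Lg * supn d (fun u => vsub (et u) (xi u)) (-r) 0.
Proof.
  intros Hr [_ [Hop [Hfr _]]] HLg Hxi Het Hbd.
  set (h := fun u => vsub (et u) (xi u)).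
  set (S := supn d h (-r) 0).
  assert (HS : 0 <= S) by apply supn_nonneg.
  assert (Hh : inCr d r h).
  { replace h with (fun u j => 1 * et u j + -1 * xi u j). apply inCr_lin; auto.
    extensionality u; extensionality j; unfold h, vsub; ring. }
  set (z := fun s => fun u j => xi u j + s * h u j).
  assert (Hz : forall s, inCr d r (z s)).
  { intros s. replace (z s) with (fun u j => 1 * xi u j + s * h u j). apply inCr_lin; auto.
    extensionality u; extensionality j; unfold z; ring. }
  assert (Hz1 : z 1 = et). { extensionality u; extensionality j; unfold z, h, vsub; ring. }
  assert (Hz0 : z 0 = xi). { extensionality u; extensionality j; unfold z; ring. }
  apply le_eps_le. intros eps Heps.
  set (L := Lg * S + eps).
  assert (HL : 0 <= L) by (unfold L; nra).
  assert (Hloc : forall sg, exists dl, 0 < dl /\ forall s', Rabs (s' - sg) < dl ->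
      vnorm d (vsub (g (z s')) (g (z sg))) <= L * Rabs (s' - sg)).
  { intros sg. set (e1 := eps / (S + 1)).
    assert (He1 : 0 < e1) by (unfold e1; apply Rdiv_lt_0_compat; lra).
    destruct (Hfr (z sg) (Hz sg) e1 He1) as [del [Hdel Hfr']].
    exists (del / (S + 1)). split. apply Rdiv_lt_0_compat; lra.
    intros s' Hs'. set (a := s' - sg).
    set (h' := fun u j => a * h u j).
    assert (Hh' : inCr d r h').
    { replace h' with (fun u j => 0 * h u j + a * h u j). apply inCr_lin; auto.
      extensionality u; extensionality j; unfold h'; ring. }
    assert (Hsh : supn d h' (-r) 0 <= Rabs a * S) by (apply supn_scal_le; auto).
    assert (Hsh0 : 0 <= supn d h' (-r) 0) by apply supn_nonneg.
    assert (Hlt : supn d h' (-r) 0 < del).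
    { eapply Rle_lt_trans. apply Hsh. pose proof (Rabs_pos a).
      apply Rle_lt_trans with (del / (S + 1) * S). apply Rmult_le_compat_r; auto. fold a in Hs'; lra.
      apply Rmult_lt_reg_r with (S + 1). lra.
      replace (del / (S + 1) * S * (S + 1)) with (del * S) by (field; lra). nra. }
    specialize (Hfr' h' Hh' Hlt).
    assert (Heq : (fun u j => z sg u j + h' u j) = z s').
    { extensionality u; extensionality j; unfold z, h', a; ring. }
    rewrite Heq in Hfr'.
    pose proof (Hop (z sg) h' (Hz sg) Hh') as Hop'.
    unfold vsub. rewrite (vnorm_ext d _ (fun i => (g (z s') i - g (z sg) i - Dg (z sg) h' i) + Dg (z sg) h' i))
      by (intros; ring).
    eapply Rle_trans. apply vnorm_triang.
    assert (e1 * S <= eps).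
    { unfold e1. apply Rmult_le_reg_r with (S + 1). lra.
      replace (eps / (S + 1) * S * (S + 1)) with (eps * S) by (field; lra). nra. }
    pose proof (Rabs_pos a). fold a. unfold L.
    apply Rle_trans with (e1 * (Rabs a * S) + Lg * (Rabs a * S)).
    - apply Rplus_le_compat. eapply Rle_trans. apply Hfr'. apply Rmult_le_compat_l; lra.
      eapply Rle_trans. apply Hop'. apply Rmult_le_compat_l; lra.
    - nra. }
  set (P := fun s => vnorm d (vsub (g (z s)) (g (z 0))) <= L * s).
  assert (P0 : P 0) by (unfold P; rewrite vsub_self_norm; lra).
  set (A := fun s => 0 <= s <= 1 /\ forall s', 0 <= s' <= s -> P s').
  assert (HA0 : A 0) by (split; [lra| intros s' Hs'; replace s' with 0 by lra; auto]).
  assert (HAb : bound A) by (exists 1; intros y [Hy _]; lra).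
  set (sg := Rsup A).
  assert (Hsg0 : 0 <= sg) by (apply Rsup_ub; auto).
  assert (Hsg1 : sg <= 1) by (apply Rsup_lub; [exists 0; auto| intros y [Hy _]; lra]).
  assert (C1 : forall s', 0 <= s' < sg -> P s').
  { intros s' Hs'. destruct (Rsup_approx A (sg - s') HAb (ex_intro _ 0 HA0)) as [y [[Hy1 Hy2] Hy3]]. lra.
    apply Hy2. fold sg in Hy3. lra. }
  destruct (Hloc sg) as [dl [Hdl Hloc']].
  assert (Hstep : forall s0 s1, P s0 -> 0 <= s0 -> s0 <= s1 -> s1 - s0 < dl -> (s0 = sg \/ s1 = sg) -> P s1).
  { intros s0 s1 HP0 Hs0 Hs01 Hd Hor. unfold P in *.
    eapply Rle_trans. apply (vsub_triang d _ (g (z s0))).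
    assert (vnorm d (vsub (g (z s1)) (g (z s0))) <= L * (s1 - s0)).
    { destruct Hor as [E|E]; [subst s0|subst s1].
      - replace (s1 - sg) with (Rabs (s1 - sg)) by (rewrite Rabs_pos_eq; lra). apply Hloc'.
        rewrite Rabs_pos_eq; lra.
      - rewrite vsub_sym. replace (sg - s0) with (Rabs (s0 - sg)) by (rewrite Rabs_left1; lra). apply Hloc'.
        rewrite Rabs_left1; lra. }
    nra. }
  assert (C2 : P sg).
  { destruct (Req_dec sg 0) as [E|E]. rewrite E; auto.
    set (s'' := Rmax 0 (sg - dl / 2)).
    assert (0 <= s'' < sg) by (unfold s''; unfold Rmax; destruct Rle_dec; lra).
    apply (Hstep s'' sg); [apply C1; auto | lra | lra | | right; auto].
    unfold s''; unfold Rmax; destruct Rle_dec; lra. }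
  assert (C3 : sg = 1).
  { destruct (Req_dec sg 1); auto. exfalso.
    set (s1 := Rmin 1 (sg + dl / 2)).
    assert (sg < s1 <= 1) by (unfold s1, Rmin; destruct Rle_dec; lra).
    assert (A s1).
    { split; [lra|]. intros s' Hs'. destruct (Rlt_le_dec s' sg). apply C1; lra.
      destruct (Req_dec s' sg). subst s'; auto.
      apply (Hstep sg s'); [auto | lra | lra | | left; auto].
      unfold s1, Rmin in *; destruct Rle_dec; lra. }
    assert (s1 <= sg) by (apply Rsup_ub; auto). lra. }
  rewrite C3 in C2. unfold P in C2. rewrite Hz1, Hz0 in C2. fold h S. lra.
Qed.

Lemma Lg_nonneg d r g Dg Lg delta : (0 < d)%nat -> 0 < r -> Hg d r g Dg Lg delta -> 0 <= Lg.
Proof. intros Hd Hr [_ [Hop _]].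
 assert (Hz : inCr d r zeroF) by apply (inCr_const d r (fun _ => 0)).
 specialize (Hop zeroF (fun _ _ => 1) Hz (inCr_const d r (fun _ => 1))).
 assert (Hv : 0 < vnorm d (fun _ => 1)).
 { unfold vnorm. apply sqrt_lt_R0. rewrite (rsum_ext d _ (fun _ => 1)) by (intros; ring).
   rewrite rsum_const. rewrite Rmult_1_r. apply lt_0_INR; auto. }
 assert (vnorm d (fun _ => 1) <= supn d (fun _ _ => 1) (-r) 0).
 { apply (supn_ub d (fun _ _ => 1) (-r) 0 0). exists (vnorm d (fun _ => 1)); intros; lra. lra. }
 pose proof (vnorm_nonneg d (Dg zeroF (fun _ _ => 1))).
 destruct (Rle_dec 0 Lg); auto. nra. Qed.

Lemma f_bound d r f Lf xi : Hf d r f Lf -> inCr d r xi ->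
  vnorm d (f xi) <= vnorm d (f zeroF) + Lf * supn d xi (-r) 0.
Proof. intros Hf' Hxi. eapply Rle_trans. apply (vnorm_le_sub d (f xi) (f zeroF)).
 apply Rplus_le_compat_l. replace (supn d xi (-r) 0) with (supn d (fun u => vsub (xi u) (zeroF u)) (-r) 0).
 apply Hf'; auto. apply (inCr_const d r (fun _ => 0)).
 f_equal. extensionality u; extensionality j; unfold vsub, zeroF; ring. Qed.

Definition dy (s u : R) (k : nat) (i : nat) : R := s + INR i * (u - s) / 2 ^ k.

Lemma pow2_pos k : 0 < 2 ^ k.
Proof. apply pow_lt; lra. Qed.

Lemma INR_le_pow2 k : INR k <= 2 ^ k.
Proof. induction k. simpl; lra. rewrite S_INR. simpl. assert (1 <= 2 ^ k) by (apply pow_R1_Rle; lra). lra. Qed.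

Lemma INR_pow2 k : INR (2 ^ k)%nat = 2 ^ k.
Proof. rewrite pow_INR. simpl. f_equal. Qed.

Lemma dy_step s u k i : dy s u k (S i) - dy s u k i = (u - s) / 2 ^ k.
Proof. unfold dy. rewrite S_INR. pose proof (pow2_pos k). field. lra. Qed.

Lemma dy_0 s u k : dy s u k 0 = s.
Proof. unfold dy. simpl. pose proof (pow2_pos k). field. lra. Qed.

Lemma dy_last s u k : dy s u k (2 ^ k)%nat = u.
Proof. unfold dy. rewrite INR_pow2. pose proof (pow2_pos k). field. lra. Qed.

Lemma dy_partition s u k : s < u -> tagged_partition s u (2 ^ k)%nat (dy s u k) (dy s u k).
Proof. intros Hsu. split; [apply dy_0|split; [apply dy_last|]]. intros i Hi.
 pose proof (dy_step s u k i). pose proof (pow2_pos k).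
 assert (0 < (u - s) / 2 ^ k) by (apply Rdiv_lt_0_compat; lra). lra. Qed.

Lemma dy_small s u del : s <= u -> 0 < del -> exists K, forall k, (K <= k)%nat -> (u - s) / 2 ^ k < del.
Proof. intros Hsu Hdel. destruct (INR_archimed del (u - s)) as [K HK]; auto.
 exists K. intros k Hk. pose proof (pow2_pos k). apply Rmult_lt_reg_r with (2 ^ k); auto.
 replace ((u - s) / 2 ^ k * 2 ^ k) with (u - s) by (field; lra).
 assert (INR K <= INR k) by (apply le_INR; auto). pose proof (INR_le_pow2 k). nra. Qed.

Lemma exists_partition a b del : a <= b -> 0 < del -> exists n p q, tagged_partition a b n p q /\
  forall i, (i < n)%nat -> p (S i) - p i < del.
Proof. intros Hab Hdel. destruct (Req_dec a b).
 - subst. exists 0%nat, (fun _ => b), (fun _ => b). split. split; auto. split; auto. intros; lia. intros; lia.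
 - destruct (dy_small a b del Hab Hdel) as [K HK]. exists (2 ^ K)%nat, (dy a b K), (dy a b K).
   split. apply dy_partition; lra. intros i _. rewrite dy_step. apply HK; lia. Qed.

Definition pcat (n1 : nat) (p1 p2 : nat -> R) (i : nat) : R := if (i <=? n1)%nat then p1 i else p2 (i - n1)%nat.
Definition qcat (n1 : nat) (q1 q2 : nat -> R) (i : nat) : R := if (i <? n1)%nat then q1 i else q2 (i - n1)%nat.

Lemma pcat_hi n1 p1 p2 i : p1 n1 = p2 0%nat -> (n1 <= i)%nat -> pcat n1 p1 p2 i = p2 (i - n1)%nat.
Proof. intros E H. unfold pcat. destruct (Nat.leb_spec i n1). replace i with n1 by lia.
 rewrite Nat.sub_diag; auto. auto. Qed.

Lemma pcat_lo n1 p1 p2 i : (i <= n1)%nat -> pcat n1 p1 p2 i = p1 i.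
Proof. intros H. unfold pcat. destruct (Nat.leb_spec i n1); auto; lia. Qed.

Lemma qcat_lo n1 q1 q2 i : (i < n1)%nat -> qcat n1 q1 q2 i = q1 i.
Proof. intros H. unfold qcat. destruct (Nat.ltb_spec i n1); auto; lia. Qed.

Lemma qcat_hi n1 q1 q2 i : (n1 <= i)%nat -> qcat n1 q1 q2 i = q2 (i - n1)%nat.
Proof. intros H. unfold qcat. destruct (Nat.ltb_spec i n1); auto; lia. Qed.

Lemma cat_partition a b c n1 p1 q1 n2 p2 q2 : tagged_partition a b n1 p1 q1 -> tagged_partition b c n2 p2 q2 ->
  tagged_partition a c (n1 + n2) (pcat n1 p1 p2) (qcat n1 q1 q2).
Proof. intros [H10 [H1n H1i]] [H20 [H2n H2i]]. assert (E : p1 n1 = p2 0%nat) by congruence.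
 split; [|split].
 - rewrite pcat_lo by lia. auto.
 - rewrite pcat_hi by (auto; lia). replace (n1 + n2 - n1)%nat with n2 by lia. auto.
 - intros i Hi. destruct (Nat.lt_ge_cases i n1).
   + rewrite !pcat_lo by lia. rewrite qcat_lo by lia. apply H1i; auto.
   + rewrite !pcat_hi by (auto; lia). rewrite qcat_hi by lia.
     replace (S i - n1)%nat with (S (i - n1)) by lia. apply H2i. lia. Qed.

Lemma cat_mesh n1 p1 p2 n2 del : p1 n1 = p2 0%nat ->
  (forall i, (i < n1)%nat -> p1 (S i) - p1 i < del) -> (forall i, (i < n2)%nat -> p2 (S i) - p2 i < del) ->
  forall i, (i < n1 + n2)%nat -> pcat n1 p1 p2 (S i) - pcat n1 p1 p2 i < del.
Proof. intros E H1 H2 i Hi. destruct (Nat.lt_ge_cases i n1).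
 - rewrite !pcat_lo by lia. auto.
 - rewrite !pcat_hi by (auto; lia). replace (S i - n1)%nat with (S (i - n1)) by lia. apply H2; lia. Qed.

Lemma cat_sum h w n1 p1 q1 n2 p2 q2 c : p1 n1 = p2 0%nat ->
  RS_sum h w (n1 + n2) (pcat n1 p1 p2) (qcat n1 q1 q2) c = RS_sum h w n1 p1 q1 c + RS_sum h w n2 p2 q2 c.
Proof. intros E. unfold RS_sum. rewrite rsum_split. f_equal.
 - apply rsum_ext; intros i Hi. rewrite !pcat_lo by lia. rewrite qcat_lo by lia. auto.
 - apply rsum_ext; intros i Hi. rewrite !pcat_hi by (auto; lia). rewrite qcat_hi by lia.
   replace (S (n1 + i) - n1)%nat with (S i) by lia. replace (n1 + i - n1)%nat with i by lia. auto. Qed.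

Lemma RS_diff d h w s u Iu Is : 0 <= s <= u -> RS_integral d h w 0 u Iu -> RS_integral d h w 0 s Is ->
  forall c, (c < d)%nat -> forall eps, 0 < eps -> exists del, 0 < del /\
    forall n p q, tagged_partition s u n p q -> (forall i, (i < n)%nat -> p (S i) - p i < del) ->
      Rabs (RS_sum h w n p q c - (Iu c - Is c)) < eps.
Proof. intros Hsu HIu HIs c Hc eps Heps.
 destruct (HIu c Hc (eps / 2)) as [d1 [Hd1 H1]]; [lra|].
 destruct (HIs c Hc (eps / 2)) as [d2 [Hd2 H2]]; [lra|].
 exists d1. split; auto. intros n p q Hp Hm.
 destruct (exists_partition 0 s (Rmin d1 d2)) as [n1 [p1 [q1 [Hp1 Hm1]]]]; [lra|apply Rmin_pos; auto|].
 assert (E : p1 n1 = p 0%nat) by (destruct Hp1 as [_ [A _]]; destruct Hp as [B _]; congruence).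
 pose proof (H2 n1 p1 q1 Hp1 (fun i Hi => Rlt_le_trans _ _ _ (Hm1 i Hi) (Rmin_r _ _))) as A2.
 pose proof (H1 (n1 + n)%nat _ _ (cat_partition _ _ _ _ _ _ _ _ _ Hp1 Hp)
   (cat_mesh n1 p1 p n d1 E (fun i Hi => Rlt_le_trans _ _ _ (Hm1 i Hi) (Rmin_l _ _)) Hm)) as A1.
 rewrite cat_sum in A1 by auto.
 revert A1 A2. unfold Rabs. destruct Rcase_abs; destruct Rcase_abs; destruct Rcase_abs; intros; lra. Qed.

Lemma ev_common d (P : nat -> nat -> Prop) :
  (forall c, (c < d)%nat -> exists N0, forall n, (N0 <= n)%nat -> P n c) ->
  exists N0, forall n, (N0 <= n)%nat -> forall c, (c < d)%nat -> P n c.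
Proof. induction d; intros H. exists 0%nat; intros; lia.
 destruct IHd as [N1 HN1]. intros c Hc; apply H; lia.
 destruct (H d (Nat.lt_succ_diag_r d)) as [N2 HN2].
 exists (Nat.max N1 N2). intros n Hn c Hc. destruct (Nat.eq_dec c d). subst; apply HN2; lia.
 apply HN1; lia. Qed.

Lemma RS_dyadic d h w s u Iu Is : 0 <= s < u -> RS_integral d h w 0 u Iu -> RS_integral d h w 0 s Is ->
  forall eps, 0 < eps -> exists K, forall k, (K <= k)%nat -> forall c, (c < d)%nat ->
    Rabs (RS_sum h w (2 ^ k)%nat (dy s u k) (dy s u k) c - (Iu c - Is c)) < eps.
Proof. intros Hsu HIu HIs eps Heps. apply ev_common. intros c Hc.
 destruct (RS_diff d h w s u Iu Is ltac:(lra) HIu HIs c Hc eps Heps) as [del [Hdel Hdd]].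
 destruct (dy_small s u del ltac:(lra) Hdel) as [K HK]. exists K. intros k Hk.
 apply Hdd. apply dy_partition; lra. intros i _. rewrite dy_step; auto. Qed.

Lemma vnorm_small d v eps : 0 <= eps -> (forall c, (c < d)%nat -> Rabs (v c) < eps) -> vnorm d v <= INR d * eps.
Proof. intros He H. eapply Rle_trans. apply vnorm_le_sumabs. rewrite <- rsum_const.
 apply rsum_le. intros; left; auto. Qed.

Lemma Rdiv_le_0_compat a b : 0 <= a -> 0 < b -> 0 <= a / b.
Proof. intros. unfold Rdiv. apply Rmult_le_pos; auto. left; apply Rinv_0_lt_compat; auto. Qed.

Lemma dy_double s u k i : dy s u (S k) (2 * i)%nat = dy s u k i.
Proof. unfold dy. rewrite mult_INR. simpl (INR 2). simpl pow. pose proof (pow2_pos k). field. lra. Qed.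

Lemma dy_double2 s u k i : dy s u (S k) (S (2 * i + 1))%nat = dy s u k (S i).
Proof. unfold dy. replace (S (2 * i + 1)) with (2 * S i)%nat by lia. rewrite mult_INR. simpl (INR 2). simpl pow.
 pose proof (pow2_pos k). field. lra. Qed.

Lemma dy_in s u k i : s <= u -> (i <= 2 ^ k)%nat -> s <= dy s u k i <= u.
Proof. intros Hsu Hi. unfold dy. pose proof (pow2_pos k).
 assert (0 <= INR i) by apply pos_INR. assert (INR i <= 2 ^ k) by (rewrite <- INR_pow2; apply le_INR; auto).
 split. assert (0 <= INR i * (u - s) / 2 ^ k) by (apply Rdiv_le_0_compat; nra). lra.
 assert (INR i * (u - s) / 2 ^ k <= u - s); [|lra].
 apply Rmult_le_reg_r with (2 ^ k); auto. replace (INR i * (u - s) / 2 ^ k * 2 ^ k) with (INR i * (u - s)) by (field; lra).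
 nra. Qed.

Lemma pw_dyadic h k th : 0 < h -> 2 ^ k * pw (h / 2 ^ (S k)) th = pw h th * (Rpower 2 (- th) * Rpower 2 (1 - th) ^ k).
Proof. intros Hh. pose proof (pow2_pos (S k)). unfold Rdiv. rewrite pw_mult by (try lra; left; apply Rinv_0_lt_compat; auto).
 rewrite (pw_pos_eq (/ 2 ^ S k)) by (apply Rinv_0_lt_compat; auto).
 rewrite <- (Rpower_pow k (Rpower 2 (1 - th))) by (unfold Rpower; apply exp_pos). rewrite Rpower_mult.
 replace (2 ^ k) with (exp (ln (2 ^ k))) by (apply exp_ln; apply pow2_pos).
 rewrite ln_pow by lra. unfold Rpower. rewrite ln_Rinv by auto. rewrite ln_pow by lra.
 replace (exp (INR k * ln 2) * (pw h th * exp (th * - (INR (S k) * ln 2)))) with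
   (pw h th * (exp (INR k * ln 2) * exp (th * - (INR (S k) * ln 2)))) by ring.
 f_equal. rewrite <- !exp_plus. f_equal. rewrite S_INR. ring. Qed.

Lemma geom_sum q K : 0 <= q < 1 -> rsum K (fun k => q ^ k) <= 1 / (1 - q).
Proof. intros Hq. assert (E : rsum K (fun k => q ^ k) * (1 - q) = 1 - q ^ K).
 { induction K; simpl; [ring|]. rewrite Rmult_plus_distr_r, IHK. ring. }
 apply Rmult_le_reg_r with (1 - q). lra. rewrite E. replace (1 / (1 - q) * (1 - q)) with 1 by (field; lra).
 pose proof (pow_le q K (proj1 Hq)). lra. Qed.

Lemma young d (G : R -> Vec) (w : R -> R) s u be nu LG Hw J :
  0 < be -> 0 < nu -> 1 < be + nu -> s < u -> 0 <= LG -> 0 <= Hw ->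
  (forall a b, s <= a -> a < b -> b <= u -> vnorm d (vsub (G b) (G a)) <= LG * pw (b - a) be) ->
  (forall a b, s <= a -> a < b -> b <= u -> Rabs (w b - w a) <= Hw * pw (b - a) nu) ->
  (forall eps, 0 < eps -> exists K, forall k, (K <= k)%nat -> forall c, (c < d)%nat ->
     Rabs (RS_sum G w (2 ^ k)%nat (dy s u k) (dy s u k) c - J c) < eps) ->
  vnorm d (fun c => J c - G s c * (w u - w s)) <= LG * Hw * (1 / (1 - Rpower 2 (1 - (nu + be)))) * pw (u - s) (nu + be).
Proof.
  intros Hbe Hnu Hth Hsu HLG HHw HG Hw' HJ.
  set (th := nu + be). set (q := Rpower 2 (1 - th)).
  assert (Hq : 0 <= q < 1).
  { unfold q, Rpower. split. left; apply exp_pos.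
    assert (0 < ln 2) by (pose proof ln_lt_2; lra). assert (1 - th < 0) by (unfold th; lra).
    assert (exp ((1 - th) * ln 2) < exp 0) by (apply exp_increasing; nra). rewrite exp_0 in *; lra. }
  assert (Hr2 : 0 <= Rpower 2 (- th) <= 1).
  { unfold Rpower. split. left; apply exp_pos.
    assert (0 < ln 2) by (pose proof ln_lt_2; lra). assert (0 < th) by (unfold th; lra).
    assert (exp (- th * ln 2) <= exp 0) by (apply exp_le_mono; nra). rewrite exp_0 in *; lra. }
  set (Dk := fun k c => RS_sum G w (2 ^ k)%nat (dy s u k) (dy s u k) c).
  assert (Hstep : forall k, vnorm d (vsub (Dk k) (Dk (S k))) <=
            LG * Hw * pw (u - s) th * (Rpower 2 (- th) * q ^ k)).
  { intros k. set (l := fun i => dy s u k i). set (m := fun i => dy s u (S k) (2 * i + 1)%nat).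
    set (rr := fun i => dy s u k (S i)).
    assert (Eq : forall c, vsub (Dk k) (Dk (S k)) c =
       rsum (2 ^ k)%nat (fun i => (G (l i) c - G (m i) c) * (w (rr i) - w (m i)))).
    { intros c. unfold vsub, Dk, RS_sum. replace (2 ^ S k)%nat with (2 * 2 ^ k)%nat by (simpl; lia).
      rewrite rsum_double. rewrite <- rsum_minus. apply rsum_ext. intros i Hi.
      replace (S (2 * i)) with (2 * i + 1)%nat by lia. rewrite dy_double, dy_double2.
      unfold l, m, rr. ring. }
    rewrite (vnorm_ext d _ (fun c => rsum (2 ^ k)%nat (fun i => (fun i c => (w (rr i) - w (m i)) * (G (l i) c - G (m i) c)) i c)))
      by (intros; rewrite Eq; apply rsum_ext; intros; ring).
    eapply Rle_trans. apply vnorm_rsum.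
    set (dk := (u - s) / 2 ^ S k).
    assert (Hdk : 0 < dk) by (unfold dk; apply Rdiv_lt_0_compat; [lra| apply pow2_pos]).
    eapply Rle_trans. apply (rsum_le _ _ (fun _ => LG * Hw * pw dk th)).
    { intros i Hi. rewrite vnorm_scal.
      assert (E1 : m i - l i = dk).
      { unfold m, l, dk. rewrite <- (dy_double s u k i). replace (2 * i + 1)%nat with (S (2 * i)) by lia. apply dy_step. }
      assert (E2 : rr i - m i = dk).
      { unfold m, rr, dk. rewrite <- (dy_double2 s u k i). apply dy_step. }
      assert (Hl : s <= l i) by (apply (proj1 (dy_in s u k i ltac:(lra) ltac:(lia)))).
      assert (Hr : rr i <= u) by (apply (proj2 (dy_in s u k (S i) ltac:(lra) ltac:(lia)))).
      assert (A1 : Rabs (w (rr i) - w (m i)) <= Hw * pw dk nu) by (rewrite <- E2; apply Hw'; lra).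
      assert (A2 : vnorm d (fun c => G (l i) c - G (m i) c) <= LG * pw dk be).
      { change (fun c => G (l i) c - G (m i) c) with (vsub (G (l i)) (G (m i))). rewrite vsub_sym.
        rewrite <- E1. apply HG; lra. }
      unfold th. rewrite pw_plus by lra. pose proof (Rabs_pos (w (rr i) - w (m i))).
      pose proof (vnorm_nonneg d (fun c => G (l i) c - G (m i) c)).
      pose proof (pw_nonneg dk nu). pose proof (pw_nonneg dk be).
      apply Rle_trans with ((Hw * pw dk nu) * (LG * pw dk be)). apply Rmult_le_compat; auto. nra. }
    rewrite rsum_const, INR_pow2.
    replace (2 ^ k * (LG * Hw * pw dk th)) with (LG * Hw * (2 ^ k * pw dk th)) by ring.
    unfold dk. rewrite pw_dyadic by lra. fold q. lra. }
  assert (Htel : forall K, vnorm d (vsub (Dk 0%nat) (Dk K)) <= rsum K (fun k => LG * Hw * pw (u - s) th * (Rpower 2 (- th) * q ^ k))).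
  { induction K. simpl. rewrite vsub_self_norm; lra. simpl rsum.
    eapply Rle_trans. apply (vsub_triang d _ (Dk K)). pose proof (Hstep K). lra. }
  assert (Hsum : forall K, rsum K (fun k => LG * Hw * pw (u - s) th * (Rpower 2 (- th) * q ^ k)) <=
            LG * Hw * (1 / (1 - q)) * pw (u - s) th).
  { intros K. rewrite (rsum_ext K _ (fun k => (LG * Hw * pw (u - s) th * Rpower 2 (- th)) * q ^ k)) by (intros; ring).
    rewrite rsum_scal. pose proof (geom_sum q K Hq).
    change (rsum K (pow q)) with (rsum K (fun k => q ^ k)). pose proof (pw_nonneg (u - s) th).
    assert (0 <= LG * Hw * pw (u - s) th) by (apply Rmult_le_pos; [apply Rmult_le_pos|]; auto).
    assert (0 <= rsum K (fun k => q ^ k)) by (apply rsum_nonneg; intros; apply pow_le; lra).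
    assert (0 < 1 / (1 - q)) by (apply Rdiv_lt_0_compat; lra).
    assert (Ha: LG * Hw * pw (u - s) th * Rpower 2 (- th) * rsum K (fun k => q ^ k) <= LG * Hw * pw (u - s) th * rsum K (fun k => q ^ k)).
    { apply Rmult_le_compat_r; auto. rewrite <- (Rmult_1_r (LG*Hw*pw (u-s) th)) at 2. apply Rmult_le_compat_l. exact H1. apply Hr2. }
    assert (Hb: LG * Hw * pw (u - s) th * rsum K (fun k => q ^ k) <= LG * Hw * pw (u - s) th * (1 / (1 - q))) by (apply Rmult_le_compat_l; auto).
    replace (LG * Hw * (1 / (1 - q)) * pw (u - s) th) with (LG * Hw * pw (u - s) th * (1 / (1 - q))) by ring. lra. }
  assert (HD0 : forall c, Dk 0%nat c = G s c * (w u - w s)).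
  { intros c. unfold Dk, RS_sum. simpl. pose proof (dy_0 s u 0). pose proof (dy_last s u 0). simpl in H0.
    rewrite H, H0. ring. }
  apply le_eps_le. intros e He.
  destruct (HJ (e / (INR d + 1))) as [K HK]. apply Rdiv_lt_0_compat; [lra| pose proof (pos_INR d); lra].
  rewrite (vnorm_ext d (fun c => J c - G s c * (w u - w s)) (vsub J (Dk 0%nat))) by (intros; unfold vsub; rewrite HD0; auto).
  eapply Rle_trans. apply (vsub_triang d _ (Dk K)). rewrite (vsub_sym d (Dk K)).
  assert (vnorm d (vsub J (Dk K)) <= INR d * (e / (INR d + 1))).
  { apply vnorm_small. left; apply Rdiv_lt_0_compat; [lra| pose proof (pos_INR d); lra].
    intros c Hc. unfold vsub. rewrite <- Rabs_Ropp. replace (- (J c - Dk K c)) with (Dk K c - J c) by ring.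
    apply HK; auto. }
  assert (INR d * (e / (INR d + 1)) <= e).
  { pose proof (pos_INR d). apply Rmult_le_reg_r with (INR d + 1). lra.
    replace (INR d * (e / (INR d + 1)) * (INR d + 1)) with (INR d * e) by (field; lra). nra. }
  pose proof (Htel K). pose proof (Hsum K). unfold q, th in *. lra.
Qed.

Lemma riemann_bound d (G : R -> Vec) s u B J : s < u -> 0 <= B ->
  (forall v, s <= v <= u -> vnorm d (G v) <= B) ->
  (forall eps, 0 < eps -> exists K, forall k, (K <= k)%nat -> forall c, (c < d)%nat ->
     Rabs (RS_sum G (fun x => x) (2 ^ k)%nat (dy s u k) (dy s u k) c - J c) < eps) ->
  vnorm d J <= B * (u - s).
Proof. intros Hsu HB HG HJ. apply le_eps_le. intros e He.
 destruct (HJ (e / (INR d + 1))) as [K HK]. apply Rdiv_lt_0_compat; [lra| pose proof (pos_INR d); lra].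
 set (DK := fun c => RS_sum G (fun x => x) (2 ^ K)%nat (dy s u K) (dy s u K) c).
 eapply Rle_trans. apply (vnorm_le_sub d J DK).
 assert (vnorm d DK <= B * (u - s)).
 { unfold DK, RS_sum. rewrite (vnorm_ext d _ (fun c => rsum (2 ^ K)%nat (fun i => (fun i c => (dy s u K (S i) - dy s u K i) * G (dy s u K i) c) i c)))
     by (intros; apply rsum_ext; intros; ring).
   eapply Rle_trans. apply vnorm_rsum.
   eapply Rle_trans. apply (rsum_le _ _ (fun _ => (u - s) / 2 ^ K * B)).
   { intros i Hi. rewrite vnorm_scal, dy_step. rewrite Rabs_pos_eq by (apply Rdiv_le_0_compat; [lra|apply pow2_pos]).
     apply Rmult_le_compat_l. apply Rdiv_le_0_compat; [lra|apply pow2_pos]. apply HG. apply dy_in; [lra|lia]. }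
   rewrite rsum_const, INR_pow2. pose proof (pow2_pos K). right; field; lra. }
 assert (vnorm d (vsub J DK) <= INR d * (e / (INR d + 1))).
 { apply vnorm_small. left; apply Rdiv_lt_0_compat; [lra| pose proof (pos_INR d); lra].
   intros c Hc. unfold vsub. rewrite <- Rabs_Ropp. replace (- (J c - DK c)) with (DK c - J c) by ring.
   apply HK; auto. }
 assert (INR d * (e / (INR d + 1)) <= e).
 { pose proof (pos_INR d). apply Rmult_le_reg_r with (INR d + 1). lra.
   replace (INR d * (e / (INR d + 1)) * (INR d + 1)) with (INR d * e) by (field; lra). nra. }
 lra. Qed.

Definition Fst C mu beta nu T w i t :=
  C * (pw (t - stop C mu beta nu T w i) (1 - beta) +
       pw (t - stop C mu beta nu T w i) (nu - beta) * holderS nu w (stop C mu beta nu T w i) t).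

Lemma stop_S C mu beta nu T w i : stop C mu beta nu T w (S i) =
  Rsup (fun t => stop C mu beta nu T w i <= t <= T /\ Fst C mu beta nu T w i t <= mu).
Proof. reflexivity. Qed.

Lemma Fst_at C mu beta nu T w i : 0 < beta < nu -> Fst C mu beta nu T w i (stop C mu beta nu T w i) = 0.
Proof. intros Hb. unfold Fst. rewrite Rminus_diag, !pw_zero by lra. ring. Qed.

Lemma stop_range C mu beta nu T w : 0 < T -> 0 < mu -> 0 < beta < nu ->
  forall i, 0 <= stop C mu beta nu T w i <= T /\ stop C mu beta nu T w i <= stop C mu beta nu T w (S i).
Proof. intros HT Hmu Hb. induction i.
 - assert (0 <= stop C mu beta nu T w 1 <= T); [|change (stop C mu beta nu T w 0) with 0; lra].
   rewrite stop_S. simpl stop. split.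
   + apply Rsup_ub. exists T; intros y [Hy _]; lra. split; [lra|]. 
     pose proof (Fst_at C mu beta nu T w 0 Hb). simpl stop in H. lra.
   + apply Rsup_lub. exists 0. split; [lra|]. pose proof (Fst_at C mu beta nu T w 0 Hb). simpl stop in H. lra.
     intros y [Hy _]; lra.
 - destruct IHi as [[H0 H1] H2].
   assert (stop C mu beta nu T w (S i) <= T).
   { rewrite stop_S. apply Rsup_lub. exists (stop C mu beta nu T w i). split; [lra|]. rewrite Fst_at; lra.
     intros y [Hy _]; lra. }
   assert (HS : stop C mu beta nu T w (S i) <= stop C mu beta nu T w (S (S i)) <= T).
   { rewrite (stop_S _ _ _ _ _ _ (S i)). split.
     + apply Rsup_ub. exists T; intros y [Hy _]; lra. split; [lra|]. rewrite Fst_at; lra.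
     + apply Rsup_lub. exists (stop C mu beta nu T w (S i)). split; [lra|]. rewrite Fst_at; lra.
       intros y [Hy _]; lra. }
   lra. Qed.

Lemma stop_mono C mu beta nu T w : 0 < T -> 0 < mu -> 0 < beta < nu ->
  forall i j, (i <= j)%nat -> stop C mu beta nu T w i <= stop C mu beta nu T w j.
Proof. intros HT Hmu Hb i j Hij. induction Hij. lra.
 pose proof (stop_range C mu beta nu T w HT Hmu Hb m). lra. Qed.

Lemma Fst_mono C mu beta nu T w i t t' : 0 < T -> 0 < mu -> 0 <= C -> 0 < beta < nu -> nu <= 1 -> is_holderS nu w 0 T ->
  stop C mu beta nu T w i <= t -> t <= t' -> t' <= T ->
  Fst C mu beta nu T w i t <= Fst C mu beta nu T w i t'.
Proof. intros HT Hmu HC Hb Hnu Hw H1 H2 H3. pose proof (stop_range C mu beta nu T w HT Hmu Hb i) as [[R0 R1] _].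
 unfold Fst. apply Rmult_le_compat_l; auto.
 set (ti := stop C mu beta nu T w i) in *.
 assert (A1 : pw (t - ti) (1 - beta) <= pw (t' - ti) (1 - beta)) by (apply pw_le_base; lra).
 assert (A2 : pw (t - ti) (nu - beta) <= pw (t' - ti) (nu - beta)) by (apply pw_le_base; lra).
 assert (A3 : holderS nu w ti t <= holderS nu w ti t').
 { unfold holderS at 1. apply Rsup_le; [|apply holderS_nonneg]. intros y [s [u [h1 [h2 [h3 ->]]]]].
   unfold holderS. apply Rsup_ub. eapply holderS_bound; eauto; lra. exists s, u; repeat split; auto; lra. }
 pose proof (holderS_nonneg nu w ti t). pose proof (pw_nonneg (t - ti) (nu - beta)).
 pose proof (pw_nonneg (t' - ti) (nu - beta)).
 assert (pw (t - ti) (nu - beta) * holderS nu w ti t <= pw (t' - ti) (nu - beta) * holderS nu w ti t')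
   by (apply Rmult_le_compat; auto). lra. Qed.

Lemma stop_below C mu beta nu T w i u : 0 < T -> 0 < mu -> 0 <= C -> 0 < beta < nu -> nu <= 1 -> is_holderS nu w 0 T ->
  stop C mu beta nu T w i <= u < stop C mu beta nu T w (S i) -> Fst C mu beta nu T w i u <= mu.
Proof. intros HT Hmu HC Hb Hnu Hw Hu.
 assert (Hbd : bound (fun t => stop C mu beta nu T w i <= t <= T /\ Fst C mu beta nu T w i t <= mu))
   by (exists T; intros y [Hy _]; lra).
 destruct (Rsup_approx _ (stop C mu beta nu T w (S i) - u) Hbd) as [t [[Ht1 Ht2] Ht3]].
 exists (stop C mu beta nu T w i). split. pose proof (stop_range C mu beta nu T w HT Hmu Hb i). lra.
 rewrite Fst_at; lra. lra.
 rewrite <- stop_S in Ht3. eapply Rle_trans; [|apply Ht2]. apply Fst_mono; auto; lra. Qed.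

Lemma stop_above C mu beta nu T w i u : stop C mu beta nu T w (S i) < u <= T ->
  stop C mu beta nu T w i <= u -> mu < Fst C mu beta nu T w i u.
Proof. intros Hu Hi. destruct (Rlt_le_dec mu (Fst C mu beta nu T w i u)); auto.
 assert (u <= stop C mu beta nu T w (S i)); [|lra].
 rewrite stop_S. apply Rsup_ub. exists T; intros y [Hy _]; lra. split; auto; lra. Qed.

Lemma stop_step_lb C mu beta nu T w : 0 < T -> 0 < mu -> 0 < C -> 0 < beta < nu -> nu <= 1 -> is_holderS nu w 0 T ->
  exists d0, 0 < d0 /\ forall i, Rmin T (stop C mu beta nu T w i + d0) <= stop C mu beta nu T w (S i).
Proof. intros HT Hmu HC Hb Hnu Hw. destruct (holderS_abs _ _ _ _ Hw) as [M [HM0 HM]].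
 destruct (pw_small (nu - beta) (mu / (C * (1 + M)))) as [h [Hh Hh']]. lra.
 apply Rdiv_lt_0_compat; auto; nra.
 exists (Rmin 1 h). split. apply Rmin_pos; lra. intros i.
 pose proof (stop_range C mu beta nu T w HT Hmu Hb i) as [[R0 R1] _].
 set (ti := stop C mu beta nu T w i) in *. set (t := Rmin T (ti + Rmin 1 h)).
 assert (Ht : ti <= t <= T) by (unfold t, Rmin; repeat destruct Rle_dec; lra).
 assert (Ht1 : t - ti <= Rmin 1 h) by (unfold t, Rmin; repeat destruct Rle_dec; lra).
 rewrite stop_S. apply Rsup_ub. exists T; intros y [Hy _]; lra. split; auto.
 unfold Fst. fold ti.
 assert (E1 : pw (t - ti) (nu - beta) <= mu / (C * (1 + M))) by (apply Hh'; pose proof (Rmin_r 1 h); lra).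
 assert (E2 : pw (t - ti) (1 - beta) <= pw (t - ti) (nu - beta)) by (apply pw_exp_anti; [pose proof (Rmin_l 1 h); lra| lra]).
 assert (E3 : holderS nu w ti t <= M) by (apply (holderS_le_M nu w 0 T); auto; lra).
 pose proof (pw_nonneg (t - ti) (nu - beta)). pose proof (holderS_nonneg nu w ti t).
 assert (E4 : mu / (C * (1 + M)) * (C * (1 + M)) = mu) by (field; nra).
 assert (pw (t - ti) (nu - beta) * holderS nu w ti t <= pw (t - ti) (nu - beta) * M) by (apply Rmult_le_compat_l; auto).
 assert (C * (pw (t - ti) (nu - beta) * (1 + M)) <= C * (mu / (C * (1 + M)) * (1 + M))) by
   (apply Rmult_le_compat_l; [lra| apply Rmult_le_compat_r; lra]).
 nra. Qed.

Lemma stop_reach C mu beta nu T w : 0 < T -> 0 < mu -> 0 < C -> 0 < beta < nu -> nu <= 1 -> is_holderS nu w 0 T ->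
  exists n0, forall i, (n0 <= i)%nat -> stop C mu beta nu T w i = T.
Proof. intros HT Hmu HC Hb Hnu Hw. destruct (stop_step_lb C mu beta nu T w HT Hmu HC Hb Hnu Hw) as [d0 [Hd0 Hst]].
 assert (Hlb : forall i, Rmin T (INR i * d0) <= stop C mu beta nu T w i).
 { induction i. simpl. unfold Rmin; destruct Rle_dec; lra.
   pose proof (Hst i). rewrite S_INR. unfold Rmin in *. repeat destruct Rle_dec; lra. }
 destruct (INR_archimed d0 T) as [n0 Hn0]; [lra|]. exists n0. intros i Hi.
 pose proof (Hlb i). pose proof (stop_range C mu beta nu T w HT Hmu Hb i).
 assert (INR n0 <= INR i) by (apply le_INR; auto).
 assert (T <= INR i * d0) by nra. unfold Rmin in *. destruct Rle_dec; lra. Qed.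

Lemma count_exists C mu beta nu T w t : 0 < T -> 0 < mu -> 0 < C -> 0 < beta < nu -> nu <= 1 -> is_holderS nu w 0 T ->
  0 <= t <= T -> exists N, is_count (stop C mu beta nu T w) t N /\
    (forall i, (1 <= i <= N)%nat -> stop C mu beta nu T w i < t) /\ t <= stop C mu beta nu T w (S N).
Proof. intros HT Hmu HC Hb Hnu Hw Ht. destruct (stop_reach C mu beta nu T w HT Hmu HC Hb Hnu Hw) as [n0 Hn0].
 set (st := stop C mu beta nu T w).
 assert (Hm : forall m, t <= st (S m) -> exists N, (N <= m)%nat /\ (forall i, (1 <= i <= N)%nat -> st i < t) /\ t <= st (S N)).
 { induction m; intros Hm.
   - exists 0%nat. split; [lia|]. split; auto. intros; lia.
   - destruct (Rle_dec t (st (S m))) as [Hle|Hlt].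
     + destruct (IHm Hle) as [N [HN1 HN2]]. exists N. split; [lia|auto].
     + exists (S m). split; [lia|]. split; auto. intros i Hi.
       pose proof (stop_mono C mu beta nu T w HT Hmu Hb i (S m) ltac:(lia)). fold st in H. lra. }
 destruct (Hm n0) as [N [_ [HN1 HN2]]]. unfold st; rewrite (Hn0 (S n0)) by lia; lra.
 exists N. split; [|split; auto].
 exists (seq 1 N). split. apply seq_NoDup. split. intros i. rewrite in_seq. split.
 - intros Hi. split; [lia|]. apply HN1; lia.
 - intros [Hi1 Hi2]. split; [lia|]. destruct (Nat.le_gt_cases i N); [lia|].
   pose proof (stop_mono C mu beta nu T w HT Hmu Hb (S N) i ltac:(lia)). fold st in H0. lra.
 - apply length_seq. Qed.

Lemma pow_le_mono a b k : 0 <= a <= b -> a ^ k <= b ^ k.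
Proof. intros H. apply pow_incr; auto. Qed.

Lemma powsum a b k : 0 <= a -> 0 <= b -> (1 <= k)%nat -> (a + b) ^ k <= 2 ^ (k - 1) * (a ^ k + b ^ k).
Proof. intros Ha Hb Hk. induction k. lia. destruct k. simpl; lra.
 assert (IH : (a + b) ^ S k <= 2 ^ (S k - 1) * (a ^ S k + b ^ S k)) by (apply IHk; lia).
 replace (S (S k) - 1)%nat with (S (S k - 1)) by lia.
 assert (Hx : (a + b) * (a ^ S k + b ^ S k) <= 2 * (a ^ S (S k) + b ^ S (S k))).
 { assert (0 <= (a - b) * (a ^ S k - b ^ S k)).
   { destruct (Rle_dec a b). assert (a ^ S k <= b ^ S k) by (apply pow_le_mono; lra). nra.
     assert (b ^ S k <= a ^ S k) by (apply pow_le_mono; lra). nra. }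
   simpl in *. nra. }
 change ((a + b) ^ S (S k)) with ((a + b) * (a + b) ^ S k).
 change (2 ^ S (S k - 1)) with (2 * 2 ^ (S k - 1)).
 assert (0 <= a + b) by lra. pose proof (pow_le 2 (S k - 1) ltac:(lra)).
 apply Rle_trans with ((a + b) * (2 ^ (S k - 1) * (a ^ S k + b ^ S k))). apply Rmult_le_compat_l; auto.
 nra. Qed.

Lemma pw_le_lin x p T : 1 <= p -> 0 <= x <= T -> pw x p <= x * pw T (p - 1).
Proof. intros Hp Hx. replace p with (1 + (p - 1)) at 1 by ring. rewrite pw_plus, pw_1 by lra.
 apply Rmult_le_compat_l; [lra|]. apply pw_le_base; lra. Qed.

Lemma rsum_tel (f : nat -> R) N : rsum N (fun j => f (S j) - f j) = f N - f 0%nat.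
Proof. induction N; simpl; [ring| rewrite IHN; ring]. Qed.

Lemma part2 C mu beta nu T w N : 0 < T -> 0 < mu -> mu < C -> 0 < beta < nu -> nu <= 1 -> is_holderS nu w 0 T ->
  (forall i, (1 <= i <= N)%nat -> stop C mu beta nu T w i < T) ->
  forall k : nat, (1 <= k)%nat -> INR k * (nu - beta) >= 1 ->
  INR N <= 2 ^ (k - 1) * (C / mu) ^ k *
    (pw T (INR k * (1 - beta)) + pw T (INR k * (nu - beta)) * holderS nu w 0 T ^ k).
Proof.
  intros HT Hmu HC Hb Hnu Hw HN k Hk Hkn.
  set (st := stop C mu beta nu T w).
  set (H := holderS nu w 0 T). assert (HH : 0 <= H) by apply holderS_nonneg.
  set (p := INR k * (1 - beta)). set (q := INR k * (nu - beta)).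
  assert (Hp : 1 <= p) by (unfold p; assert (0 <= INR k) by apply pos_INR; nra).
  assert (Hq : 1 <= q) by (unfold q; lra).
  assert (HCm : 0 < C / mu) by (apply Rdiv_lt_0_compat; lra).
  assert (Hpow : 0 < 2 ^ (k - 1) * (C / mu) ^ k) by (apply Rmult_lt_0_compat; apply pow_lt; lra).
  set (Z := 2 ^ (k - 1) * (C / mu) ^ k * (pw T (p - 1) + pw T (q - 1) * H ^ k)).
  assert (HRHS : 2 ^ (k - 1) * (C / mu) ^ k * (pw T p + pw T q * H ^ k) = Z * T).
  { unfold Z. replace p with (1 + (p - 1)) at 1 by ring. replace q with (1 + (q - 1)) at 1 by ring.
    rewrite !pw_plus, pw_1 by lra. ring. }
  fold p q H. destruct N as [|N'].
  { simpl. pose proof (pw_nonneg T p). pose proof (pw_nonneg T q). pose proof (pow_le H k HH).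
    apply Rmult_le_pos; [lra|]. apply Rplus_le_le_0_compat; auto. apply Rmult_le_pos; auto. }
  set (N := S N') in *.
  assert (HNpos : 0 < INR N) by (apply lt_0_INR; unfold N; lia).
  assert (HstN : st N < T) by (apply HN; unfold N; lia).
  pose proof (stop_range C mu beta nu T w HT Hmu Hb N) as [[R0 _] _]. fold st in R0.
  set (eps := (T - st N) / INR N).
  assert (Heps : 0 < eps) by (apply Rdiv_lt_0_compat; lra).
  assert (HepsN : eps * INR N = T - st N) by (unfold eps; field; lra).
  assert (Heps1 : eps <= T - st N).
  { assert (1 <= INR N) by (replace 1 with (INR 1) by reflexivity; apply le_INR; unfold N; lia). nra. }
  set (D := fun j => st (S j) + eps - st j).
  assert (Hj : forall j, (j < N)%nat -> 1 <= Z * D j).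
  { intros j Hj.
    pose proof (stop_range C mu beta nu T w HT Hmu Hb j) as [[Rj0 Rj1] Rj2]. fold st in Rj0, Rj1, Rj2.
    assert (Hsj : st (S j) <= st N) by (apply stop_mono; auto; lia).
    set (tj := st (S j) + eps).
    assert (Htj : st (S j) < tj <= T) by (unfold tj; lra).
    assert (HF : mu < Fst C mu beta nu T w j tj) by (apply stop_above; fold st; lra).
    unfold Fst in HF. fold st in HF.
    assert (HD : D j = tj - st j) by (unfold D, tj; ring).
    assert (HD0 : 0 <= D j <= T) by lra.
    set (hj := holderS nu w (st j) tj).
    assert (Hhj : hj <= H) by (apply holderS_mono; auto; lra).
    assert (Hhj0 : 0 <= hj) by apply holderS_nonneg.
    fold hj in HF. rewrite <- HD in HF.
    set (a := pw (D j) (1 - beta)). set (b := pw (D j) (nu - beta) * hj).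
    assert (Ha : 0 <= a) by apply pw_nonneg.
    assert (Hbb : 0 <= b) by (apply Rmult_le_pos; [apply pw_nonneg|auto]).
    assert (H1 : 1 <= (C / mu * (a + b)) ^ k).
    { apply pow_R1_Rle. apply Rmult_le_reg_r with mu; auto.
      replace (C / mu * (a + b) * mu) with (C * (a + b)) by (field; lra). fold a b in HF. lra. }
    rewrite Rpow_mult_distr in H1.
    pose proof (powsum a b k Ha Hbb Hk).
    assert (Hak : a ^ k <= D j * pw T (p - 1)).
    { unfold a. rewrite <- pw_INR by (try lra; lia). apply pw_le_lin; auto. }
    assert (Hbk : b ^ k <= D j * pw T (q - 1) * H ^ k).
    { unfold b. rewrite Rpow_mult_distr. rewrite <- pw_INR by (try lra; lia). fold q.
      pose proof (pw_le_lin (D j) q T Hq HD0). pose proof (pow_le_mono hj H k (conj Hhj0 Hhj)).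
      pose proof (pw_nonneg (D j) q). pose proof (pow_le hj k Hhj0).
      apply Rle_trans with (D j * pw T (q - 1) * hj ^ k). apply Rmult_le_compat_r; auto.
      apply Rmult_le_compat_l; auto. apply Rmult_le_pos. lra. apply pw_nonneg. }
    unfold Z. pose proof (pow_le (C / mu) k ltac:(lra)).
    assert (a ^ k + b ^ k <= D j * (pw T (p - 1) + pw T (q - 1) * H ^ k)) by lra.
    apply Rle_trans with ((C / mu) ^ k * (2 ^ (k - 1) * (a ^ k + b ^ k))).
    apply Rle_trans with ((C / mu) ^ k * (a + b) ^ k); auto. apply Rmult_le_compat_l; auto.
    pose proof (pow_le 2 (k - 1) ltac:(lra)).
    apply Rle_trans with ((C / mu) ^ k * (2 ^ (k - 1) * (D j * (pw T (p - 1) + pw T (q - 1) * H ^ k)))).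
    apply Rmult_le_compat_l; auto. apply Rmult_le_compat_l; auto. right; ring. }
  assert (Hsum : rsum N D = T).
  { unfold D. rewrite (rsum_ext N _ (fun j => (st (S j) - st j) + eps)) by (intros; ring).
    rewrite rsum_plus, rsum_tel, rsum_const. change (st 0%nat) with 0. lra. }
  rewrite HRHS. rewrite <- Hsum. rewrite <- rsum_scal.
  rewrite <- (Rmult_1_r (INR N)). rewrite <- rsum_const. apply rsum_le. auto.
Qed.

Lemma seg_supn_le d be r x v t : 0 < r -> 0 <= be -> 0 <= v <= t -> is_holder d be x (-r) t ->
  supn d (seg x v) (-r) 0 <= supn d x (-r) t.
Proof. intros Hr Hbe Hv Hh. apply supn_le; [|apply supn_nonneg]. intros u Hu. unfold seg.
 apply supn_ub. apply holder_bounded with be; auto; lra. lra. Qed.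

Lemma ext_pair d be x A B s t Bd : 0 < be -> is_holder d be x A B -> A <= s -> s < t -> t <= B -> 0 <= Bd ->
  (forall u, s < u < t -> vnorm d (vsub (x u) (x s)) <= Bd * pw (u - s) be) ->
  vnorm d (vsub (x t) (x s)) <= Bd * pw (t - s) be.
Proof. intros Hbe Hh HA Hst HB HBd Hu. destruct (holder_abs _ _ _ _ _ Hh) as [M [HM0 HM]].
 apply le_eps_le. intros e He.
 destruct (pw_small be (e / (M + 1)) Hbe) as [h [Hh0 Hh1]]. apply Rdiv_lt_0_compat; lra.
 set (u := Rmax ((s + t) / 2) (t - h / 2)).
 assert (Hu1 : s < u < t) by (unfold u, Rmax; destruct Rle_dec; lra).
 assert (Hu2 : t - u <= h) by (unfold u, Rmax; destruct Rle_dec; lra).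
 eapply Rle_trans. apply (vsub_triang d _ (x u)).
 assert (vnorm d (vsub (x t) (x u)) <= e).
 { eapply Rle_trans. apply HM; lra. pose proof (Hh1 (t - u) Hu2).
   apply Rle_trans with (M * (e / (M + 1))). apply Rmult_le_compat_l; auto.
   apply Rmult_le_reg_r with (M + 1). lra. replace (M * (e / (M + 1)) * (M + 1)) with (M * e) by (field; lra). nra. }
 assert (vnorm d (vsub (x u) (x s)) <= Bd * pw (t - s) be).
 { eapply Rle_trans. apply Hu; auto. apply Rmult_le_compat_l; auto. apply pw_le_base; lra. }
 lra. Qed.

Lemma vsub_zeroF (a : Vec) u : vsub a (zeroF u) = a.
Proof. extensionality i. unfold vsub, zeroF; ring. Qed.

Lemma Kc_pos nu beta : 1 < nu + beta -> 0 < 1 / (1 - Rpower 2 (1 - (nu + beta))).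
Proof. intros H. assert (Rpower 2 (1 - (nu + beta)) < 1).
 { unfold Rpower. assert (0 < ln 2) by (pose proof ln_lt_2; lra).
   assert (exp ((1 - (nu + beta)) * ln 2) < exp 0) by (apply exp_increasing; nra). rewrite exp_0 in *; lra. }
 apply Rdiv_lt_0_compat; lra. Qed.

Lemma pair_bound d r T nu beta delta w f g Dg Lf Lg eta x mu C ti t s u :
  (0 < d)%nat -> 0 < r -> 0 < T -> nu <= 1 -> 0 < beta < nu -> 1 < nu + beta ->
  is_holderS nu w 0 T -> Hf d r f Lf -> Hg d r g Dg Lg delta ->
  is_solution d r T f g w beta eta x ->
  C = 2 * (vnorm d (g zeroF) + Rmax Lf (vnorm d (f zeroF)) + Lg * (1 / (1 - Rpower 2 (1 - (nu + beta))) + 1)) ->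
  0 < mu -> mu < C -> 0 <= ti -> t <= T ->
  (forall v, ti <= v < t -> C * (pw (v - ti) (1 - beta) + pw (v - ti) (nu - beta) * holderS nu w ti v) <= mu) ->
  ti <= s -> s < u -> u < t ->
  vnorm d (vsub (x u) (x s)) <= mu / 2 * (1 + hnorm d beta x (-r) t) * pw (u - s) beta.
Proof.
  intros Hd Hr HT Hnu Hb Hnb HwS hf hg hx HC Hmu HmuC Hti HtT HF Hs Hsu Hut.
  destruct hx as [Hxh [Hx0 Hxi]].
  assert (HLg : 0 <= Lg) by (apply (Lg_nonneg d r g Dg Lg delta Hd Hr hg)).
  set (Kc := 1 / (1 - Rpower 2 (1 - (nu + beta)))) in *.
  assert (HKc : 0 < Kc) by (apply Kc_pos; auto).
  set (L' := Rmax Lf (vnorm d (f zeroF))) in *.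
  assert (HL'1 : Lf <= L') by apply Rmax_l. assert (HL'2 : vnorm d (f zeroF) <= L') by apply Rmax_r.
  pose proof (vnorm_nonneg d (f zeroF)). pose proof (vnorm_nonneg d (g zeroF)).
  assert (Hxt : is_holder d beta x (-r) t) by (eapply is_holder_sub; eauto; lra).
  set (Phi := hnorm d beta x (-r) t).
  set (S := supn d x (-r) t). set (Hx := holder d beta x (-r) t).
  assert (HS0 : 0 <= S) by apply supn_nonneg. assert (HHx0 : 0 <= Hx) by apply holder_nonneg.
  assert (HPhi : Phi = S + Hx) by reflexivity.
  destruct (Hxi u ltac:(lra)) as [I1u [I2u [HI1u [HI2u Hxu]]]].
  destruct (Hxi s ltac:(lra)) as [I1s [I2s [HI1s [HI2s Hxs]]]].
  set (J1 := fun c => I1u c - I1s c). set (J2 := fun c => I2u c - I2s c).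
  assert (HJ1 := RS_dyadic d _ _ s u I1u I1s ltac:(lra) HI1u HI1s).
  assert (HJ2 := RS_dyadic d _ _ s u I2u I2s ltac:(lra) HI2u HI2s).
  assert (Hseg : forall v, 0 <= v <= T -> inCr d r (seg x v)) by (intros v Hv; apply (seg_inCr d beta r T x v); [lra|lra|exact Hxh]).
  assert (Hsegs : forall v, 0 <= v <= t -> supn d (seg x v) (-r) 0 <= S) by (intros v Hv; apply (seg_supn_le d beta); auto; lra).
  assert (Hfb : forall v, s <= v <= u -> vnorm d (f (seg x v)) <= L' * (1 + S)).
  { intros v Hv. eapply Rle_trans. apply (f_bound d r f Lf); auto. apply Hseg; lra.
    pose proof (Hsegs v ltac:(lra)). pose proof (supn_nonneg d (seg x v) (-r) 0).
    destruct (Rle_dec 0 Lf). assert (Lf * supn d (seg x v) (-r) 0 <= L' * S) by (apply Rmult_le_compat; lra). nra.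
    assert (Lf * supn d (seg x v) (-r) 0 <= 0) by nra. nra. }
  assert (HR1 : vnorm d J1 <= L' * (1 + S) * (u - s)).
  { assert (0 <= L') by lra.
    apply riemann_bound with (G := fun v => f (seg x v)); [lra | apply Rmult_le_pos; lra | exact Hfb | exact HJ1]. }
  assert (Hgb : vnorm d (g (seg x s)) <= vnorm d (g zeroF) + Lg * S).
  { eapply Rle_trans. apply (vnorm_le_sub d _ (g zeroF)). apply Rplus_le_compat_l.
    eapply Rle_trans. apply (g_lip d r g Dg Lg delta zeroF (seg x s)); auto.
    apply (inCr_const d r (fun _ => 0)). apply Hseg; lra.
    destruct (holder_bounded d beta x (-r) t) as [Bd HBd]; auto; try lra. exists Bd. intros v Hv.
    rewrite vsub_zeroF. apply HBd; lra.
    apply Rmult_le_compat_l; auto. apply supn_le; auto. intros v Hv. rewrite vsub_zeroF. unfold seg. apply supn_ub. apply holder_bounded with beta; auto; lra. lra. }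
  assert (HgH : forall a b, s <= a -> a < b -> b <= u ->
            vnorm d (vsub (g (seg x b)) (g (seg x a))) <= Lg * Hx * pw (b - a) beta).
  { intros a b Ha Hab Hbu. eapply Rle_trans. apply (g_lip d r g Dg Lg delta); auto. apply Hseg; lra. apply Hseg; lra.
    destruct (holder_abs _ _ _ _ _ Hxt) as [M [HM0 HM]]. exists (M * pw (b - a) beta). intros v Hv.
    unfold seg. replace (b - a) with ((b + v) - (a + v)) by ring. apply HM; lra.
    rewrite Rmult_assoc. apply Rmult_le_compat_l; auto. apply supn_le.
    intros v Hv. unfold seg. replace (b - a) with ((b + v) - (a + v)) by ring. apply holder_ub; auto; lra.
    apply Rmult_le_pos; auto; apply pw_nonneg. }
  set (Hw := holderS nu w ti u).
  assert (HHw0 : 0 <= Hw) by apply holderS_nonneg.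
  assert (HwH : forall a b, s <= a -> a < b -> b <= u -> Rabs (w b - w a) <= Hw * pw (b - a) nu).
  { intros a b Ha Hab Hbu. apply holderS_ub with 0 T; auto; lra. }
  assert (HY : vnorm d (fun c => J2 c - g (seg x s) c * (w u - w s)) <= Lg * Hx * Hw * Kc * pw (u - s) (nu + beta)).
  { unfold Kc. apply (young d (fun v => g (seg x v)) w s u beta nu (Lg * Hx) Hw J2); try lra.
    apply Rmult_le_pos; auto. exact HgH. exact HwH. exact HJ2. }
  assert (Hdec : vnorm d (vsub (x u) (x s)) <=
     vnorm d J1 + (vnorm d (fun c => J2 c - g (seg x s) c * (w u - w s)) + Rabs (w u - w s) * vnorm d (g (seg x s)))).
  { rewrite (vnorm_ext d (vsub (x u) (x s)) (fun c => J1 c + ((J2 c - g (seg x s) c * (w u - w s)) + (w u - w s) * g (seg x s) c))).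
    eapply Rle_trans. apply vnorm_triang. apply Rplus_le_compat_l. eapply Rle_trans. apply vnorm_triang.
    rewrite vnorm_scal. lra.
    intros c Hc. unfold vsub, J1, J2. rewrite Hxu, Hxs by auto. ring. }
  set (h := u - s). set (A := u - ti).
  assert (Hh : 0 < h) by (unfold h; lra). assert (HhA : h <= A) by (unfold h, A; lra).
  pose proof (HF u ltac:(lra)) as HFu. fold A Hw in HFu.
  assert (HCpos : 0 < C) by lra.
  assert (HFu' : C * pw A (1 - beta) + C * (pw A (nu - beta) * Hw) <= mu) by (rewrite <- Rmult_plus_distr_l; exact HFu).
  assert (HCb : 0 <= C * (pw A (nu - beta) * Hw)) by (apply Rmult_le_pos; [lra| apply Rmult_le_pos; [apply pw_nonneg|auto]]).
  assert (HA1 : A < 1).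
  { assert (pw A (1 - beta) < 1).
    { assert (C * pw A (1 - beta) < C * 1) by lra. apply Rmult_lt_reg_l with C; lra. }
    apply (pw_lt_1_inv A (1 - beta)); [lra | auto]. }
  set (P := pw h beta). set (a := pw A (1 - beta)). set (b := pw A (nu - beta)).
  assert (HP : 0 < P) by (apply pw_pos; auto).
  assert (Ha : 0 <= a) by apply pw_nonneg. assert (Hbb : 0 <= b) by apply pw_nonneg.
  assert (E1 : h <= P * a).
  { replace h with (pw h 1) at 1 by (apply pw_1; lra). replace 1 with (beta + (1 - beta)) by ring.
    rewrite pw_plus by lra. apply Rmult_le_compat_l; [lra|]. apply pw_le_base; lra. }
  assert (E2 : pw h nu <= P * b).
  { replace nu with (beta + (nu - beta)) at 1 by ring. rewrite pw_plus by lra.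
    apply Rmult_le_compat_l; [lra|]. apply pw_le_base; lra. }
  assert (E3 : pw h (nu + beta) <= P * b).
  { replace (nu + beta) with (beta + nu) by ring. rewrite pw_plus by lra. fold P.
    apply Rmult_le_compat_l; [lra|]. eapply Rle_trans; [|apply pw_le_base with (x := h); lra].
    apply pw_exp_anti; lra. }
  assert (E4 : Rabs (w u - w s) <= Hw * (P * b)).
  { eapply Rle_trans. apply HwH; lra. apply Rmult_le_compat_l; auto. }
  set (G0 := vnorm d (g zeroF)) in *.
  assert (HL'0 : 0 <= L') by lra.
  assert (T1 : vnorm d J1 <= L' * (1 + S) * (P * a)).
  { eapply Rle_trans. apply HR1. apply Rmult_le_compat_l. apply Rmult_le_pos; lra. fold h; lra. }
  assert (T2 : Lg * Hx * Hw * Kc * pw (u - s) (nu + beta) <= Lg * Hx * Hw * Kc * (P * b)).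
  { apply Rmult_le_compat_l. apply Rmult_le_pos; [apply Rmult_le_pos; [apply Rmult_le_pos|]|]; lra. fold h; lra. }
  assert (T3 : Rabs (w u - w s) * vnorm d (g (seg x s)) <= Hw * (P * b) * (G0 + Lg * S)).
  { apply Rmult_le_compat; auto. apply Rabs_pos. apply vnorm_nonneg. }
  assert (X1 : L' * (1 + S) <= C / 2 * (1 + Phi)).
  { rewrite HPhi, HC. assert (L' * (1 + S) <= L' * (1 + (S + Hx))) by (apply Rmult_le_compat_l; lra).
    assert (0 <= (G0 + Lg * (Kc + 1)) * (1 + (S + Hx))) by (apply Rmult_le_pos; nra). nra. }
  assert (X2 : Lg * Hx * Kc + G0 + Lg * S <= C / 2 * (1 + Phi)).
  { rewrite HPhi, HC.
    assert (Lg * Hx * Kc <= Lg * Kc * (1 + (S + Hx))) by (assert (0 <= Lg * Kc) by nra; nra).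
    assert (Lg * S <= Lg * (1 + (S + Hx))) by (apply Rmult_le_compat_l; lra).
    assert (G0 <= G0 * (1 + (S + Hx))) by nra.
    assert (0 <= L' * (1 + (S + Hx))) by (apply Rmult_le_pos; lra). nra. }
  assert (Hphi0 : 0 <= 1 + Phi) by lra.
  assert (Y : vnorm d (vsub (x u) (x s)) <= P * (a * (L' * (1 + S)) + b * Hw * (Lg * Hx * Kc + G0 + Lg * S))).
  { eapply Rle_trans. apply Hdec. eapply Rle_trans with (L' * (1 + S) * (P * a) + (Lg * Hx * Hw * Kc * (P * b) + Hw * (P * b) * (G0 + Lg * S))).
    lra. right; ring. }
  assert (Z1 : a * (L' * (1 + S)) <= a * (C / 2 * (1 + Phi))) by (apply Rmult_le_compat_l; auto).
  assert (Z2 : b * Hw * (Lg * Hx * Kc + G0 + Lg * S) <= b * Hw * (C / 2 * (1 + Phi))) by (apply Rmult_le_compat_l; [apply Rmult_le_pos|]; auto).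
  assert (Z3 : a * (C / 2 * (1 + Phi)) + b * Hw * (C / 2 * (1 + Phi)) <= mu / 2 * (1 + Phi)).
  { replace (a * (C / 2 * (1 + Phi)) + b * Hw * (C / 2 * (1 + Phi))) with ((C * a + C * (b * Hw)) / 2 * (1 + Phi)) by (field).
    apply Rmult_le_compat_r; auto. fold a b in HFu'. lra. }
  eapply Rle_trans. apply Y. rewrite (Rmult_comm (mu / 2 * (1 + Phi))). apply Rmult_le_compat_l; lra.
Qed.

Lemma step_lemma d r T nu beta delta w f g Dg Lf Lg eta x mu C ti t :
  (0 < d)%nat -> 0 < r -> 0 < T -> nu <= 1 -> 0 < beta < nu -> 1 < nu + beta ->
  is_holderS nu w 0 T -> Hf d r f Lf -> Hg d r g Dg Lg delta ->
  is_solution d r T f g w beta eta x ->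
  C = 2 * (vnorm d (g zeroF) + Rmax Lf (vnorm d (f zeroF)) + Lg * (1 / (1 - Rpower 2 (1 - (nu + beta))) + 1)) ->
  0 < mu -> mu < C -> mu < 1 -> 0 <= ti -> ti <= t -> t <= T ->
  (forall v, ti <= v < t -> C * (pw (v - ti) (1 - beta) + pw (v - ti) (nu - beta) * holderS nu w ti v) <= mu) ->
  1 + hnorm d beta x (-r) t <= / (1 - mu) * (1 + hnorm d beta x (-r) ti).
Proof.
  intros Hd Hr HT Hnu Hb Hnb HwS hf hg hx HC Hmu HmuC Hmu1 Hti Htit HtT HF.
  assert (Hinv : 1 <= / (1 - mu)).
  { rewrite <- Rinv_1. apply Rinv_le_contravar; lra. }
  assert (Hxh : is_holder d beta x (-r) T) by (destruct hx; auto).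
  assert (Hxt : is_holder d beta x (-r) t) by (eapply is_holder_sub; eauto; lra).
  assert (Hxti : is_holder d beta x (-r) ti) by (eapply is_holder_sub; eauto; lra).
  destruct (Req_dec ti t) as [E|Hne].
  { subst ti. pose proof (supn_nonneg d x (-r) t). pose proof (holder_nonneg d beta x (-r) t).
    unfold hnorm in *. assert (0 <= 1 + (supn d x (-r) t + holder d beta x (-r) t)) by lra. nra. }
  set (Phi := hnorm d beta x (-r) t).
  assert (HPhi0 : 0 <= Phi) by (unfold Phi, hnorm; pose proof (supn_nonneg d x (-r) t); pose proof (holder_nonneg d beta x (-r) t); lra).
  set (A' := mu / 2 * (1 + Phi)).
  assert (HA' : 0 <= A') by (unfold A'; nra).
  assert (PB : forall s u, ti <= s -> s < u -> u <= t -> vnorm d (vsub (x u) (x s)) <= A' * pw (u - s) beta).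
  { intros s u Hs Hsu Hut. destruct (Rlt_le_dec u t) as [Hlt|Hge].
    - exact (pair_bound d r T nu beta delta w f g Dg Lf Lg eta x mu C ti t s u Hd Hr HT Hnu Hb Hnb HwS hf hg hx HC Hmu HmuC Hti HtT HF Hs Hsu Hlt).
    - replace u with t by lra. apply (ext_pair d beta x (-r) T s t A'); auto; try lra.
      intros u' Hu'. exact (pair_bound d r T nu beta delta w f g Dg Lf Lg eta x mu C ti t s u' Hd Hr HT Hnu Hb Hnb HwS hf hg hx HC Hmu HmuC Hti HtT HF Hs (proj1 Hu') (proj2 Hu')). }
  assert (Ht1 : t - ti <= 1).
  { destruct (Rle_dec (t - ti) 1); auto. exfalso.
    pose proof (HF (ti + 1) ltac:(lra)). replace (ti + 1 - ti) with 1 in H by ring.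
    assert (pw 1 (1 - beta) = 1) by (rewrite pw_pos_eq by lra; unfold Rpower; rewrite ln_1, Rmult_0_r, exp_0; auto).
    rewrite H0 in H. pose proof (pw_nonneg 1 (nu - beta)). pose proof (holderS_nonneg nu w ti (ti + 1)).
    assert (0 <= C * (pw 1 (nu - beta) * holderS nu w ti (ti + 1))) by (apply Rmult_le_pos; [lra|apply Rmult_le_pos; auto]).
    nra. }
  assert (HOLD : holder d beta x (-r) t <= holder d beta x (-r) ti + A').
  { apply holder_le; [|pose proof (holder_nonneg d beta x (-r) ti); lra].
    intros s u Hs Hsu Hut.
    assert (HHo : 0 <= holder d beta x (-r) ti) by apply holder_nonneg.
    destruct (Rle_dec u ti).
    - eapply Rle_trans. apply holder_ub; eauto. apply Rmult_le_compat_r. apply pw_nonneg. lra.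
    - destruct (Rle_dec ti s).
      + eapply Rle_trans. apply PB; auto; lra. apply Rmult_le_compat_r. apply pw_nonneg. lra.
      + eapply Rle_trans. apply (vsub_triang d _ (x ti)).
        assert (vnorm d (vsub (x u) (x ti)) <= A' * pw (u - s) beta).
        { eapply Rle_trans. apply PB; lra. apply Rmult_le_compat_l; auto. apply pw_le_base; lra. }
        assert (vnorm d (vsub (x ti) (x s)) <= holder d beta x (-r) ti * pw (u - s) beta).
        { eapply Rle_trans. apply holder_ub; eauto; lra. apply Rmult_le_compat_l; auto. apply pw_le_base; lra. }
        lra. }
  assert (SUP : supn d x (-r) t <= supn d x (-r) ti + A').
  { apply supn_le; [|pose proof (supn_nonneg d x (-r) ti); lra].
    intros v Hv. destruct (Rle_dec v ti).
    - assert (vnorm d (x v) <= supn d x (-r) ti); [|lra]. apply supn_ub. apply holder_bounded with beta; auto; lra. lra.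
    - eapply Rle_trans. apply (vnorm_le_sub d (x v) (x ti)).
      assert (vnorm d (x ti) <= supn d x (-r) ti) by (apply supn_ub; [apply holder_bounded with beta; auto; lra| lra]).
      assert (vnorm d (vsub (x v) (x ti)) <= A').
      { eapply Rle_trans. apply PB; lra. rewrite <- (Rmult_1_r A') at 2. apply Rmult_le_compat_l; auto.
        apply pw_le_1; lra. }
      lra. }
  assert (HPhi : Phi <= hnorm d beta x (-r) ti + mu * (1 + Phi)).
  { assert (E1 : Phi = supn d x (-r) t + holder d beta x (-r) t) by reflexivity.
    assert (E2 : hnorm d beta x (-r) ti = supn d x (-r) ti + holder d beta x (-r) ti) by reflexivity.
    unfold A' in *. lra. }
  apply Rmult_le_reg_l with (1 - mu). lra.
  rewrite <- Rmult_assoc, Rinv_r by lra. lra.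
Qed.

Lemma hnorm_eq d be r x eta : (forall u, -r <= u <= 0 -> forall c, (c < d)%nat -> x u c = eta u c) ->
  hnorm d be x (-r) 0 = hnorm d be eta (-r) 0.
Proof. intros H. unfold hnorm, supn, holder. f_equal; f_equal; extensionality y; apply propositional_extensionality.
 - split; intros [u [Hu ->]]; exists u; split; auto; apply vnorm_ext; intros; rewrite H; auto.
 - split; intros [s [t [h1 [h2 [h3 ->]]]]]; exists s, t; repeat split; auto; f_equal; apply vnorm_ext;
   intros; unfold vsub; rewrite !H; auto; lra. Qed.

Lemma hnorm_d0 be x a b : hnorm 0 be x a b <= 0.
Proof. assert (E : forall v, vnorm 0 v = 0) by (intros; unfold vnorm; simpl; apply sqrt_0).
 unfold hnorm. assert (supn 0 x a b <= 0) by (apply supn_le; [intros; rewrite E; lra| lra]).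
 assert (holder 0 be x a b <= 0) by (apply holder_le; [intros; rewrite E; rewrite Rmult_0_l; lra| lra]).
 lra. Qed.

Theorem theorem2
  (d : nat) (r T nu delta beta : R)
  (hr : 0 < r) (hT : 0 < T)
  (hnu : 1/2 < nu <= 1)
  (hdelta : (1 - nu) / nu < delta <= 1)
  (hbeta : 0 < beta < nu) (hbd : beta * delta + nu > 1)
  (w : R -> R) (hw : is_holderS nu w 0 T) (hw0 : little_holderS nu w 0 T)
  (f g : (R -> Vec) -> Vec) (Dg : (R -> Vec) -> (R -> Vec) -> Vec) (Lf Lg : R)
  (hf : Hf d r f Lf) (hg : Hg d r g Dg Lg delta)
  (eta x : R -> Vec) (heta : is_holder d beta eta (-r) 0)
  (hx : is_solution d r T f g w beta eta x)
  (mu : R) :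
  let L' := Rmax Lf (vnorm d (f zeroF)) in
  let K := 1 / (1 - Rpower 2 (1 - (nu + beta))) in
  let C := 2 * (vnorm d (g zeroF) + L' + Lg * (K + 1)) in
  0 < mu -> mu < Rmin 1 C ->
  (forall t, 0 <= t <= T -> exists N,
     is_count (stop C mu beta nu T w) t N /\
     hnorm d beta (seg x t) (-r) 0
       <= / (1 - mu) ^ (N + 1) * (hnorm d beta eta (-r) 0 + 1)) /\
  (exists N, is_count (stop C mu beta nu T w) T N /\
     forall k : nat, (1 <= k)%nat -> INR k * (nu - beta) >= 1 ->
       INR N <= 2 ^ (k - 1) * (C / mu) ^ k *
         (pw T (INR k * (1 - beta)) + pw T (INR k * (nu - beta)) * holderS nu w 0 T ^ k)).
Proof.
  intros L' K C Hmu Hmu2.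
  assert (Hmu1 : mu < 1) by (pose proof (Rmin_l 1 C); lra).
  assert (HmuC : mu < C) by (pose proof (Rmin_r 1 C); lra).
  assert (HCpos : 0 < C) by lra.
  assert (Hnb : 1 < nu + beta).
  { assert (beta * delta <= beta * 1) by (apply Rmult_le_compat_l; lra). lra. }
  assert (Hnu1 : nu <= 1) by lra.
  set (st := stop C mu beta nu T w).
  split.
  - intros t Ht.
    destruct (count_exists C mu beta nu T w t hT Hmu HCpos hbeta Hnu1 hw Ht) as [N [Hc [HN1 HN2]]].
    exists N. split; auto.
    assert (Hinv : 0 < / (1 - mu)) by (apply Rinv_0_lt_compat; lra).
    assert (HR0 : 0 <= / (1 - mu) ^ (N + 1) * (hnorm d beta eta (-r) 0 + 1)).
    { apply Rmult_le_pos. rewrite <- pow_inv. apply pow_le; lra.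
      unfold hnorm. pose proof (supn_nonneg d eta (-r) 0). pose proof (holder_nonneg d beta eta (-r) 0). lra. }
    destruct d as [|d'].
    { pose proof (hnorm_d0 beta (seg x t) (-r) 0). lra. }
    set (d := S d') in *. assert (Hd : (0 < d)%nat) by (unfold d; lia).
    assert (HC : C = 2 * (vnorm d (g zeroF) + Rmax Lf (vnorm d (f zeroF)) + Lg * (1 / (1 - Rpower 2 (1 - (nu + beta))) + 1))) by reflexivity.
    assert (Hxh : is_holder d beta x (-r) T) by (destruct hx; auto).
    set (Phi := fun s => hnorm d beta x (-r) s).
    assert (Iter : forall j, 1 + Phi (st j) <= (/ (1 - mu)) ^ j * (1 + Phi 0)).
    { induction j.
      - simpl. change (st 0%nat) with 0. lra.
      - pose proof (stop_range C mu beta nu T w hT Hmu hbeta j) as [[R0 R1] R2]. fold st in R0, R1, R2.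
        pose proof (stop_range C mu beta nu T w hT Hmu hbeta (S j)) as [[R3 R4] _]. fold st in R3, R4.
        assert (1 + Phi (st (S j)) <= / (1 - mu) * (1 + Phi (st j))).
        { unfold Phi. apply (step_lemma d r T nu beta delta w f g Dg Lf Lg eta x mu C (st j) (st (S j))); auto.
          intros v Hv. apply (stop_below C mu beta nu T w j v hT Hmu ltac:(lra) hbeta Hnu1 hw Hv). }
        simpl. pose proof (pow_le (/ (1 - mu)) j ltac:(lra)).
        apply Rle_trans with (/ (1 - mu) * (1 + Phi (st j))); auto.
        rewrite Rmult_assoc. apply Rmult_le_compat_l; lra. }
    assert (HstN : st N <= t).
    { destruct N. change (st 0%nat) with 0. lra. left; apply HN1; lia. }
    pose proof (stop_range C mu beta nu T w hT Hmu hbeta N) as [[R0 R1] R2]. fold st in R0, R1, R2.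
    assert (Last : 1 + Phi t <= / (1 - mu) * (1 + Phi (st N))).
    { unfold Phi. apply (step_lemma d r T nu beta delta w f g Dg Lf Lg eta x mu C (st N) t); auto; try lra.
      intros v Hv. apply (stop_below C mu beta nu T w N v hT Hmu ltac:(lra) hbeta Hnu1 hw). unfold st in *. lra. }
    assert (HP0 : Phi 0 = hnorm d beta eta (-r) 0) by (apply hnorm_eq; destruct hx as [_ [H0 _]]; auto).
    assert (Hseg : hnorm d beta (seg x t) (-r) 0 <= Phi t).
    { apply seg_hnorm_le; auto; try lra. eapply is_holder_sub; eauto; lra. }
    rewrite <- pow_inv. rewrite Nat.add_1_r. simpl pow. rewrite <- HP0.
    pose proof (Iter N). pose proof (pow_le (/ (1 - mu)) N ltac:(lra)).
    assert (/ (1 - mu) * (1 + Phi (st N)) <= / (1 - mu) * ((/ (1 - mu)) ^ N * (1 + Phi 0))) by (apply Rmult_le_compat_l; lra).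
    assert (0 <= Phi 0) by (unfold Phi, hnorm; pose proof (supn_nonneg d x (-r) 0); pose proof (holder_nonneg d beta x (-r) 0); lra).
    rewrite Rmult_assoc. rewrite (Rplus_comm (Phi 0)). lra.
  - destruct (count_exists C mu beta nu T w T hT Hmu HCpos hbeta Hnu1 hw ltac:(lra)) as [N [Hc [HN1 HN2]]].
    exists N. split; auto. intros k Hk Hkn.
    apply (part2 C mu beta nu T w N hT Hmu HmuC hbeta Hnu1 hw HN1 k Hk Hkn).
Qed.
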